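(* Let $a_1,a_2,a_3\in\mathbb C$ be distinct and non-collinear, $\{i,j,k\}=\{1,2,3\}$, let $b$ be a point in the interior of the triangle $\Delta_Q$, and let $l_b$ be the straight line through $b$ parallel to the side $\overline{a_ja_k}$. Then there exists a unique point $b'\in l_b$ such that $\int_{a_j}^{a_k}\sqrt{\frac{b'-t}{(t-a_1)(t-a_2)(t-a_3)}}\,dt\in\mathbb R$, and moreover $b'\in\Delta_Q\cap l_b$.
   Context: $\Delta_Q$ is the convex hull of $a_1,a_2,a_3$. The integral is along the straight segment from $a_j$ to $a_k$ with a continuous branch of the square root (the reality condition does not depend on the branch). *)

(* Defs.v *)
From Stdlib Require Import Reals Lra.
Open Scope R_scope.

Definition Cpx : Type := (R * R)%type.
Definition Re (z : Cpx) : R := fst z.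
Definition Im (z : Cpx) : R := snd z.
Definition Cadd (z w : Cpx) : Cpx := (fst z + fst w, snd z + snd w).
Definition Csub (z w : Cpx) : Cpx := (fst z - fst w, snd z - snd w).
Definition Cmul (z w : Cpx) : Cpx :=
  (fst z * fst w - snd z * snd w, fst z * snd w + snd z * fst w).
Definition Cinv (z : Cpx) : Cpx :=
  (fst z / (fst z ^ 2 + snd z ^ 2), - snd z / (fst z ^ 2 + snd z ^ 2)).
Definition Cdiv (z w : Cpx) : Cpx := Cmul z (Cinv w).
Definition Cscale (r : R) (z : Cpx) : Cpx := (r * fst z, r * snd z).

Definition noncollinear (a1 a2 a3 : Cpx) : Prop :=
  (fst a2 - fst a1) * (snd a3 - snd a1) - (snd a2 - snd a1) * (fst a3 - fst a1) <> 0.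

Definition in_triangle (a1 a2 a3 z : Cpx) : Prop :=
  exists l1 l2 l3 : R, 0 <= l1 /\ 0 <= l2 /\ 0 <= l3 /\ l1 + l2 + l3 = 1 /\
    z = Cadd (Cadd (Cscale l1 a1) (Cscale l2 a2)) (Cscale l3 a3).

Definition in_triangle_interior (a1 a2 a3 z : Cpx) : Prop :=
  exists l1 l2 l3 : R, 0 < l1 /\ 0 < l2 /\ 0 < l3 /\ l1 + l2 + l3 = 1 /\
    z = Cadd (Cadd (Cscale l1 a1) (Cscale l2 a2)) (Cscale l3 a3).

Definition sel (a1 a2 a3 : Cpx) (n : nat) : Cpx :=
  match n with 1%nat => a1 | 2%nat => a2 | _ => a3 end.

Definition on_parallel_line (b p q z : Cpx) : Prop :=
  exists r : R, z = Cadd b (Cscale r (Csub q p)).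

Definition improper_int (f : R -> R) (a b l : R) : Prop :=
  (forall c d, a < c -> c <= d -> d < b -> exists _ : Riemann_integrable f c d, True) /\
  (forall eps, 0 < eps -> exists delta, 0 < delta /\
     forall c d (pr : Riemann_integrable f c d),
       a < c -> c < a + delta -> b - delta < d -> d < b -> c <= d ->
       Rabs (RiemannInt pr - l) < eps).

Definition integrand (a1 a2 a3 b' t : Cpx) : Cpx :=
  Cdiv (Csub b' t) (Cmul (Cmul (Csub t a1) (Csub t a2)) (Csub t a3)).

(* The integral  int_{p}^{q} sqrt((b'-t)/((t-a1)(t-a2)(t-a3))) dt  along the straight
   segment t = p + s (q - p), s in (0,1), with a continuous branch h of the square root
   on the open segment, exists (as an improper integral) and is a real number.
   With dt = (q - p) ds, the integral is  int_0^1 h(s) (q - p) ds. *)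
Definition segment_integral_real (a1 a2 a3 b' p q : Cpx) : Prop :=
  exists h : R -> Cpx,
    (forall s, 0 < s < 1 ->
        continuity_pt (fun u => fst (h u)) s /\ continuity_pt (fun u => snd (h u)) s) /\
    (forall s, 0 < s < 1 ->
        Cmul (h s) (h s) = integrand a1 a2 a3 b' (Cadd p (Cscale s (Csub q p)))) /\
    (exists L : R, improper_int (fun s => fst (Cmul (h s) (Csub q p))) 0 1 L) /\
    improper_int (fun s => snd (Cmul (h s) (Csub q p))) 0 1 0.

(* Main.v *)
Require Import Defs.
From Stdlib Require Import Reals Lra Lia Psatz Field ClassicalEpsilon FunctionalExtensionality Ranalysis5.
Open Scope R_scope.


Definition RInt (f : R -> R) (a b : R) : R :=
  match excluded_middle_informative (exists pr : Riemann_integrable f a b, True) with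
  | left H => RiemannInt (proj1_sig (constructive_indefinite_description _ H))
  | right _ => 0 end.

Lemma RInt_eq f a b (pr : Riemann_integrable f a b) : RInt f a b = RiemannInt pr.
Proof.
  unfold RInt. destruct excluded_middle_informative as [H|H].
  - apply RiemannInt_P5.
  - exfalso; apply H; exists pr; auto.
Qed.

Lemma Rabs_le_inv x y : Rabs x <= y -> - y <= x <= y.
Proof. unfold Rabs; destruct Rcase_abs; intros; lra. Qed.

Lemma Rabs_le_intro x y : - y <= x <= y -> Rabs x <= y.
Proof. unfold Rabs; destruct Rcase_abs; intros; lra. Qed.

Lemma Rabs_sub_tr a b : Rabs (a - b) <= Rabs a + Rabs b.
Proof. unfold Rabs; repeat destruct Rcase_abs; lra. Qed.

Definition cont01 (f : R -> R) := forall s, 0 < s < 1 -> continuity_pt f s.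

Lemma RI_of_cont f c d : cont01 f -> 0 < c -> c <= d -> d < 1 -> Riemann_integrable f c d.
Proof. intros Hf ? ? ?; apply continuity_implies_RiemannInt; auto; intros; apply Hf; lra. Qed.

Lemma cont01_lin f g l : cont01 f -> cont01 g -> cont01 (fun x => f x + l * g x).
Proof.
  intros Hf Hg s Hs. apply continuity_pt_plus; [apply Hf; auto|].
  apply continuity_pt_mult; [apply continuity_pt_const; intros ? ?; reflexivity| apply Hg; auto].
Qed.

Lemma cont01_scal f l : cont01 f -> cont01 (fun x => l * f x).
Proof.
  intros Hf s Hs.
  apply continuity_pt_mult; [apply continuity_pt_const; intros ? ?; reflexivity| apply Hf; auto].
Qed.

Lemma RInt_chasles f a b c : cont01 f -> 0 < a -> a <= b -> b <= c -> c < 1 ->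
  RInt f a b + RInt f b c = RInt f a c.
Proof.
  intros Hf ? ? ? ?.
  rewrite (RInt_eq _ _ _ (RI_of_cont f a b Hf ltac:(lra) ltac:(lra) ltac:(lra))).
  rewrite (RInt_eq _ _ _ (RI_of_cont f b c Hf ltac:(lra) ltac:(lra) ltac:(lra))).
  rewrite (RInt_eq _ _ _ (RI_of_cont f a c Hf ltac:(lra) ltac:(lra) ltac:(lra))).
  apply RiemannInt_P26.
Qed.

Lemma RInt_le f g a b : cont01 f -> cont01 g -> 0 < a -> a <= b -> b < 1 ->
  (forall x, a < x < b -> f x <= g x) -> RInt f a b <= RInt g a b.
Proof.
  intros Hf Hg ? ? ? H.
  rewrite (RInt_eq _ _ _ (RI_of_cont f a b Hf ltac:(lra) ltac:(lra) ltac:(lra))).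
  rewrite (RInt_eq _ _ _ (RI_of_cont g a b Hg ltac:(lra) ltac:(lra) ltac:(lra))).
  apply RiemannInt_P19; auto.
Qed.

Lemma RInt_lin f g l a b : cont01 f -> cont01 g -> 0 < a -> a <= b -> b < 1 ->
  RInt (fun x => f x + l * g x) a b = RInt f a b + l * RInt g a b.
Proof.
  intros Hf Hg ? ? ?.
  rewrite (RInt_eq _ _ _ (RI_of_cont f a b Hf ltac:(lra) ltac:(lra) ltac:(lra))).
  rewrite (RInt_eq _ _ _ (RI_of_cont g a b Hg ltac:(lra) ltac:(lra) ltac:(lra))).
  rewrite (RInt_eq _ _ _ (RI_of_cont _ a b (cont01_lin f g l Hf Hg) ltac:(lra) ltac:(lra) ltac:(lra))).
  apply RiemannInt_P13.
Qed.

Lemma RInt_zero a b : RInt (fun _ => 0) a b = 0.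
Proof.
  change (RInt (fct_cte 0) a b = 0).
  rewrite (RInt_eq (fct_cte 0) _ _ (RiemannInt_P14 a b 0)), (RiemannInt_P15 (RiemannInt_P14 a b 0)); ring.
Qed.

Lemma RInt_const a b k : RInt (fun _ => k) a b = k * (b - a).
Proof.
  change (RInt (fct_cte k) a b = k * (b - a)).
  rewrite (RInt_eq (fct_cte k) _ _ (RiemannInt_P14 a b k)), (RiemannInt_P15 (RiemannInt_P14 a b k)); ring.
Qed.

Lemma RInt_scal f l a b : cont01 f -> 0 < a -> a <= b -> b < 1 ->
  RInt (fun x => l * f x) a b = l * RInt f a b.
Proof.
  intros Hf ? ? ?.
  assert (E: (fun x => l * f x) = (fun x => (fun _ => 0) x + l * f x)).
  { apply functional_extensionality; intros; ring. }
  rewrite E, RInt_lin; auto.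
  - assert (Z : RInt (fct_cte 0) a b = 0) by (rewrite (RInt_eq (fct_cte 0) _ _ (RiemannInt_P14 a b 0)), (RiemannInt_P15 (RiemannInt_P14 a b 0)); ring). change (RInt (fct_cte 0) a b + l * RInt f a b = l * RInt f a b). rewrite Z; ring.
  - intros s Hs; apply continuity_pt_const; intros ? ?; reflexivity.
Qed.

Lemma RInt_const_bnd f a b l u : cont01 f -> 0 < a -> a <= b -> b < 1 ->
  (forall x, a < x < b -> l <= f x <= u) -> l * (b - a) <= RInt f a b <= u * (b - a).
Proof.
  intros Hf ? ? ? H.
  rewrite (RInt_eq _ _ _ (RI_of_cont f a b Hf ltac:(lra) ltac:(lra) ltac:(lra))).
  apply RiemannInt_const_bound; auto.
Qed.

Definition Dk (s : R) : R := / (sqrt s * sqrt (1 - s)).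
Definition Ek (s : R) : R := / sqrt s + / sqrt (1 - s).
Definition Phi (s : R) : R := 2 * sqrt s - 2 * sqrt (1 - s).

Lemma cont01_Dk : cont01 Dk.
Proof.
  intros s Hs. unfold Dk. reg; try lra.
  apply Rmult_integral_contrapositive; split; apply Rgt_not_eq, sqrt_lt_R0; lra.
Qed.

Lemma Dk_pos s : 0 < s < 1 -> 0 < Dk s.
Proof.
  intros; unfold Dk; apply Rinv_0_lt_compat, Rmult_lt_0_compat; apply sqrt_lt_R0; lra.
Qed.

Lemma Phi_deriv x : 0 < x < 1 -> derivable_pt_lim Phi x (Ek x).
Proof.
  intros Hx.
  assert (H1 : derivable_pt_lim (fun s => 1 - s) x (0 - 1)).
  { apply derivable_pt_lim_minus; [apply derivable_pt_lim_const | apply derivable_pt_lim_id]. }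
  assert (H2 : derivable_pt_lim (fun s => sqrt (1 - s)) x (/ (2 * sqrt (1 - x)) * (0 - 1))).
  { apply (derivable_pt_lim_comp (fun s => 1 - s) sqrt x); auto.
    apply derivable_pt_lim_sqrt; lra. }
  assert (H3 := derivable_pt_lim_sqrt x ltac:(lra)).
  assert (H4 : derivable_pt_lim Phi x (2 * / (2 * sqrt x) - 2 * (/ (2 * sqrt (1 - x)) * (0 - 1)))).
  { unfold Phi. apply derivable_pt_lim_minus; apply derivable_pt_lim_scal; auto. }
  replace (Ek x) with (2 * / (2 * sqrt x) - 2 * (/ (2 * sqrt (1 - x)) * (0 - 1))); auto.
  unfold Ek. assert (0 < sqrt x) by (apply sqrt_lt_R0; lra).
  assert (0 < sqrt (1 - x)) by (apply sqrt_lt_R0; lra). field; lra.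
Qed.

Lemma cont01_Ek : cont01 Ek.
Proof.
  intros s Hs. unfold Ek. reg; try lra; apply Rgt_not_eq, sqrt_lt_R0; lra.
Qed.

Lemma RInt_Ek c d : 0 < c -> c <= d -> d < 1 -> RInt Ek c d = Phi d - Phi c.
Proof.
  intros Hc Hcd Hd.
  assert (C0 : forall x, c <= x <= d -> continuity_pt Ek x) by (intros; apply cont01_Ek; lra).
  assert (anti1 := RiemannInt_P29 Hcd C0).
  assert (anti2 : antiderivative Ek Phi c d).
  { split; auto. intros x Hx. exists (exist _ (Ek x) (Phi_deriv x ltac:(lra))). reflexivity. }
  destruct (antiderivative_Ucte _ _ _ _ _ anti1 anti2) as [K HK].
  rewrite (RInt_eq _ _ _ (RI_of_cont Ek c d cont01_Ek Hc Hcd Hd)).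
  rewrite (RiemannInt_P20 Hcd (FTC_P1 Hcd C0)).
  rewrite (HK d), (HK c); try lra. 
Qed.

Lemma Dk_le s : 0 < s < 1 -> Dk s <= 2 * Ek s.
Proof.
  intros Hs. unfold Dk, Ek.
  assert (a : 0 < sqrt s) by (apply sqrt_lt_R0; lra).
  assert (b : 0 < sqrt (1 - s)) by (apply sqrt_lt_R0; lra).
  assert (ia : 0 < / sqrt s) by (apply Rinv_0_lt_compat; auto).
  assert (ib : 0 < / sqrt (1 - s)) by (apply Rinv_0_lt_compat; auto).
  rewrite Rinv_mult.
  destruct (Rle_dec s (1/2)).
  - assert (1/2 <= sqrt (1 - s)).
    { rewrite <- (sqrt_pow2 (1/2)) by lra. apply sqrt_le_1_alt. lra. }
    assert (/ sqrt (1 - s) <= 2).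
    { replace 2 with (/ (1/2)) by field. apply Rinv_le_contravar; lra. }
    nra.
  - assert (1/2 <= sqrt s).
    { rewrite <- (sqrt_pow2 (1/2)) by lra. apply sqrt_le_1_alt. lra. }
    assert (/ sqrt s <= 2).
    { replace 2 with (/ (1/2)) by field. apply Rinv_le_contravar; lra. }
    nra.
Qed.

Lemma Phi_mono x y : 0 <= x -> x <= y -> y <= 1 -> Phi x <= Phi y.
Proof.
  intros. unfold Phi.
  assert (sqrt x <= sqrt y) by (apply sqrt_le_1_alt; lra).
  assert (sqrt (1 - y) <= sqrt (1 - x)) by (apply sqrt_le_1_alt; lra).
  lra.
Qed.

Lemma Phi_range x : 0 <= x <= 1 -> -2 <= Phi x <= 2.
Proof.
  intros. unfold Phi.
  assert (0 <= sqrt x) by apply sqrt_pos.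
  assert (0 <= sqrt (1-x)) by apply sqrt_pos.
  assert (sqrt x <= sqrt 1) by (apply sqrt_le_1_alt; lra).
  assert (sqrt (1-x) <= sqrt 1) by (apply sqrt_le_1_alt; lra).
  rewrite sqrt_1 in *. lra.
Qed.

Lemma RInt_Dk_bound c d : 0 < c -> c <= d -> d < 1 -> 0 <= RInt Dk c d <= 8.
Proof.
  intros. split.
  - assert (H2 := RInt_const_bnd Dk c d 0 (2 * Ek ((c+d)/2)) cont01_Dk).
    assert (RInt (fun _ => 0) c d <= RInt Dk c d).
    { apply RInt_le; auto. intros s Hs; apply continuity_pt_const; intros ? ?; reflexivity.
      apply cont01_Dk. intros; apply Rlt_le, Dk_pos; lra. }
    rewrite RInt_zero in H3. lra.
  - assert (RInt Dk c d <= RInt (fun x => 0 + 2 * Ek x) c d).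
    { apply RInt_le; auto. apply cont01_Dk. apply cont01_lin.
      intros s Hs; apply continuity_pt_const; intros ? ?; reflexivity. apply cont01_Ek.
      intros; rewrite Rplus_0_l; apply Dk_le; lra. }
    rewrite RInt_lin in H2; auto.
    2: intros s Hs; apply continuity_pt_const; intros ? ?; reflexivity.
    2: apply cont01_Ek.
    rewrite RInt_Ek in H2; auto.
    rewrite RInt_zero in H2.
    pose proof (Phi_mono c d ltac:(lra) ltac:(lra) ltac:(lra)). pose proof (Phi_range c ltac:(lra)). pose proof (Phi_range d ltac:(lra)). lra.
Qed.

Lemma antitone_lim (g : R -> R) K :
  (forall c1 c2, 0 < c1 -> c1 <= c2 -> c2 <= 1/2 -> g c2 <= g c1) ->
  (forall c, 0 < c <= 1/2 -> g c <= K) ->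
  exists l, forall eps, 0 < eps -> exists delta, 0 < delta <= 1/2 /\
    forall c, 0 < c < delta -> Rabs (g c - l) < eps.
Proof.
  intros Hmono Hb.
  set (E := fun y => exists c, 0 < c <= 1/2 /\ y = g c).
  assert (bE : bound E) by (exists K; intros y [c [Hc ->]]; auto).
  assert (nE : exists y, E y) by (exists (g (1/2)); exists (1/2); split; [lra|auto]).
  destruct (completeness E bE nE) as [l [Hub Hlub]].
  exists l. intros eps Heps.
  destruct (Classical_Prop.classic (exists c0, 0 < c0 <= 1/2 /\ l - eps < g c0)) as [[c0 [Hc0 Hg0]]|Hn].
  - exists c0. split; auto. intros c Hc.
    assert (g c0 <= g c) by (apply Hmono; lra).
    assert (g c <= l) by (apply Hub; exists c; split; [lra|auto]).
    apply Rabs_def1; lra.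
  - exfalso. assert (l <= l - eps); [|lra].
    apply Hlub. intros y [c [Hc ->]].
    destruct (Rle_dec (g c) (l - eps)) as [?|Hnot]; auto.
    exfalso; apply Hn; exists c; split; auto; lra.
Qed.

Lemma cont01_const k : cont01 (fun _ => k).
Proof. intros s Hs; apply continuity_pt_const; intros ? ?; reflexivity. Qed.

Lemma RInt_nonneg f a b : cont01 f -> 0 < a -> a <= b -> b < 1 ->
  (forall x, a < x < b -> 0 <= f x) -> 0 <= RInt f a b.
Proof.
  intros. rewrite <- (RInt_zero a b). apply RInt_le; auto. apply cont01_const.
Qed.

Lemma M_nonneg f M : (forall s, 0 < s < 1 -> Rabs (f s) <= M * Dk s) -> 0 <= M.
Proof.
  intros H. specialize (H (1/2) ltac:(lra)).
  pose proof (Dk_pos (1/2) ltac:(lra)). assert (0 <= Rabs (f (1/2))) by apply Rabs_pos.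
  destruct (Rle_dec 0 M); auto. nra.
Qed.

Lemma improper_exists f M : cont01 f ->
  (forall s, 0 < s < 1 -> Rabs (f s) <= M * Dk s) -> exists L, improper_int f 0 1 L.
Proof.
  intros Hf HM. pose proof (M_nonneg f M HM) as HM0.
  set (fp := fun x => f x + M * Dk x).
  assert (Hfp : cont01 fp) by (apply cont01_lin; auto; apply cont01_Dk).
  assert (fp_nn : forall s, 0 < s < 1 -> 0 <= fp s).
  { intros s Hs. specialize (HM s Hs). unfold fp. apply Rabs_le_inv in HM. lra. }
  assert (fp_le : forall s, 0 < s < 1 -> fp s <= 2 * M * Dk s).
  { intros s Hs. specialize (HM s Hs). unfold fp. apply Rabs_le_inv in HM. lra. }
  assert (fpI : forall c d, 0 < c -> c <= d -> d < 1 -> 0 <= RInt fp c d <= 16 * M).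
  { intros c d ? ? ?. split. apply RInt_nonneg; auto. intros; apply fp_nn; lra.
    apply (Rle_trans _ (RInt (fun x => (2 * M) * Dk x) c d) _).
    apply RInt_le; auto. apply cont01_scal, cont01_Dk. intros; apply fp_le; lra.
    rewrite RInt_scal; auto. 2: apply cont01_Dk. pose proof (RInt_Dk_bound c d ltac:(lra) ltac:(lra) ltac:(lra)); nra. }
  assert (fE : f = fun x => fp x + (- M) * Dk x).
  { apply functional_extensionality; intros; unfold fp; ring. }
  destruct (antitone_lim (fun c => RInt fp c (1/2)) (16 * M)) as [lgL HgL].
  { intros c1 c2 ? ? ?. rewrite <- (RInt_chasles fp c1 c2 (1/2)); auto; try lra.
    pose proof (RInt_nonneg fp c1 c2 Hfp ltac:(lra) ltac:(lra) ltac:(lra) ltac:(intros; apply fp_nn; lra)).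
    lra. }
  { intros c Hc. apply fpI; lra. }
  destruct (antitone_lim (fun c => RInt Dk c (1/2)) 8) as [lhL HhL].
  { intros c1 c2 ? ? ?. rewrite <- (RInt_chasles Dk c1 c2 (1/2)); auto; try lra.
    pose proof (RInt_Dk_bound c1 c2 ltac:(lra) ltac:(lra) ltac:(lra)). lra. apply cont01_Dk. }
  { intros c Hc. apply RInt_Dk_bound; lra. }
  destruct (antitone_lim (fun c => RInt fp (1/2) (1 - c)) (16 * M)) as [lgR HgR].
  { intros c1 c2 ? ? ?. rewrite <- (RInt_chasles fp (1/2) (1 - c2) (1 - c1)); auto; try lra.
    pose proof (RInt_nonneg fp (1 - c2) (1 - c1) Hfp ltac:(lra) ltac:(lra) ltac:(lra) ltac:(intros; apply fp_nn; lra)).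
    lra. }
  { intros c Hc. apply fpI; lra. }
  destruct (antitone_lim (fun c => RInt Dk (1/2) (1 - c)) 8) as [lhR HhR].
  { intros c1 c2 ? ? ?. rewrite <- (RInt_chasles Dk (1/2) (1 - c2) (1 - c1)); auto; try lra.
    pose proof (RInt_Dk_bound (1 - c2) (1 - c1) ltac:(lra) ltac:(lra) ltac:(lra)). lra. apply cont01_Dk. }
  { intros c Hc. apply RInt_Dk_bound; lra. }
  exists ((lgL - M * lhL) + (lgR - M * lhR)). split.
  - intros c d ? ? ?. exists (RI_of_cont f c d Hf ltac:(lra) ltac:(lra) ltac:(lra)); auto.
  - intros eps Heps.
    set (e1 := eps / (4 * (M + 1))).
    assert (He1 : 0 < e1) by (unfold e1; apply Rdiv_lt_0_compat; lra).
    destruct (HgL (eps/4) ltac:(lra)) as [d1 [Hd1 P1]].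
    destruct (HgR (eps/4) ltac:(lra)) as [d2 [Hd2 P2]].
    destruct (HhL e1 He1) as [d3 [Hd3 P3]].
    destruct (HhR e1 He1) as [d4 [Hd4 P4]].
    exists (Rmin (Rmin d1 d2) (Rmin d3 d4)).
    assert (m1 := Rmin_l (Rmin d1 d2) (Rmin d3 d4)). assert (m2 := Rmin_r (Rmin d1 d2) (Rmin d3 d4)).
    assert (m3 := Rmin_l d1 d2). assert (m4 := Rmin_r d1 d2).
    assert (m5 := Rmin_l d3 d4). assert (m6 := Rmin_r d3 d4).
    split. { repeat apply Rmin_pos; lra. }
    intros c d pr ? ? ? ? ?.
    rewrite <- (RInt_eq f c d pr).
    rewrite <- (RInt_chasles f c (1/2) d); auto; try lra.
    rewrite fE. rewrite !RInt_lin; auto; try lra; try apply cont01_Dk.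
    specialize (P1 c ltac:(lra)). specialize (P3 c ltac:(lra)).
    specialize (P2 (1 - d) ltac:(lra)). specialize (P4 (1 - d) ltac:(lra)).
    replace (1 - (1 - d)) with d in P2, P4 by ring.
    cbv beta in P1, P2, P3, P4.
    apply Rabs_def2 in P1. apply Rabs_def2 in P2. apply Rabs_def2 in P3. apply Rabs_def2 in P4.
    assert (M * e1 < eps / 4).
    { unfold e1. apply Rmult_lt_reg_r with (4 * (M + 1)). lra.
      field_simplify; try lra. }
    apply Rabs_def1; nra.
Qed.

Lemma improper_unique f L1 L2 : improper_int f 0 1 L1 -> improper_int f 0 1 L2 -> L1 = L2.
Proof.
  intros [I1 H1] [I2 H2].
  destruct (Req_dec L1 L2) as [|Hne]; auto. exfalso.
  set (eps := Rabs (L1 - L2) / 2).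
  assert (He : 0 < eps) by (unfold eps; assert (0 < Rabs (L1 - L2)) by (apply Rabs_pos_lt; lra); lra).
  destruct (H1 eps He) as [d1 [Hd1 P1]]. destruct (H2 eps He) as [d2 [Hd2 P2]].
  set (c := Rmin (Rmin d1 d2) (1/2) / 2).
  assert (m1 := Rmin_l (Rmin d1 d2) (1/2)). assert (m2 := Rmin_r (Rmin d1 d2) (1/2)).
  assert (m3 := Rmin_l d1 d2). assert (m4 := Rmin_r d1 d2).
  assert (Hpos : 0 < Rmin (Rmin d1 d2) (1/2)) by (repeat apply Rmin_pos; lra).
  destruct (I1 c (1 - c) ltac:(unfold c; lra) ltac:(unfold c; lra) ltac:(unfold c; lra)) as [pr _].
  specialize (P1 c (1 - c) pr ltac:(unfold c; lra) ltac:(unfold c; lra) ltac:(unfold c; lra) ltac:(unfold c; lra) ltac:(unfold c; lra)).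
  specialize (P2 c (1 - c) pr ltac:(unfold c; lra) ltac:(unfold c; lra) ltac:(unfold c; lra) ltac:(unfold c; lra) ltac:(unfold c; lra)).
  assert (Rabs (L1 - L2) <= Rabs (RiemannInt pr - L2) + Rabs (RiemannInt pr - L1)).
  { replace (L1 - L2) with ((RiemannInt pr - L2) - (RiemannInt pr - L1)) by ring.
    apply Rabs_sub_tr. }
  unfold eps in *. lra.
Qed.


Lemma improper_lin f g l L1 L2 : improper_int f 0 1 L1 -> improper_int g 0 1 L2 ->
  improper_int (fun x => f x + l * g x) 0 1 (L1 + l * L2).
Proof.
  intros [I1 H1] [I2 H2]. split.
  - intros c d ? ? ?. destruct (I1 c d) as [p1 _]; auto. destruct (I2 c d) as [p2 _]; auto.
    exists (RiemannInt_P10 l p1 p2); auto.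
  - intros eps Heps.
    set (e := eps / (2 * (Rabs l + 1))).
    assert (Hl : 0 <= Rabs l) by apply Rabs_pos.
    assert (He : 0 < e) by (unfold e; apply Rdiv_lt_0_compat; lra).
    destruct (H1 e He) as [d1 [Hd1 P1]]. destruct (H2 e He) as [d2 [Hd2 P2]].
    exists (Rmin d1 d2). split; [apply Rmin_pos; lra|].
    assert (m3 := Rmin_l d1 d2). assert (m4 := Rmin_r d1 d2).
    intros c d pr ? ? ? ? ?.
    destruct (I1 c d) as [p1 _]; try lra. destruct (I2 c d) as [p2 _]; try lra.
    rewrite (RiemannInt_P13 p1 p2 pr).
    specialize (P1 c d p1 ltac:(lra) ltac:(lra) ltac:(lra) ltac:(lra) ltac:(lra)).
    specialize (P2 c d p2 ltac:(lra) ltac:(lra) ltac:(lra) ltac:(lra) ltac:(lra)).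
    replace (RiemannInt p1 + l * RiemannInt p2 - (L1 + l * L2)) with
      ((RiemannInt p1 - L1) + l * (RiemannInt p2 - L2)) by ring.
    eapply Rle_lt_trans; [apply Rabs_triang|]. rewrite Rabs_mult.
    assert (Rabs l * Rabs (RiemannInt p2 - L2) <= Rabs l * e) by
      (apply Rmult_le_compat_l; lra).
    assert (e * (2 * (Rabs l + 1)) = eps) by (unfold e; field; lra).
    nra.
Qed.

Lemma improper_ext f g L : (forall s, 0 < s < 1 -> f s = g s) ->
  improper_int f 0 1 L -> improper_int g 0 1 L.
Proof.
  intros E [I1 H1]. split.
  - intros c d ? ? ?. destruct (I1 c d) as [p1 _]; auto.
    exists (@Riemann_integrable_ext f g c d
             ltac:(intros x Hx; rewrite Rmin_left in Hx by lra; rewrite Rmax_right in Hx by lra; apply E; lra) p1).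
    auto.
  - intros eps Heps. destruct (H1 eps Heps) as [d1 [Hd1 P1]]. exists d1; split; auto.
    intros c d pr ? ? ? ? ?. destruct (I1 c d) as [p1 _]; try lra.
    rewrite <- (RiemannInt_P18 p1 pr); auto. intros; apply E; lra.
Qed.

Lemma improper_bound f M L : improper_int f 0 1 L ->
  (forall s, 0 < s < 1 -> Rabs (f s) <= M * Dk s) -> Rabs L <= 8 * M.
Proof.
  intros [I1 H1] HM. pose proof (M_nonneg f M HM) as HM0.
  destruct (Rle_dec (Rabs L) (8 * M)) as [|Hn]; auto. exfalso.
  set (eps := Rabs L - 8 * M).
  destruct (H1 eps ltac:(unfold eps; lra)) as [d1 [Hd1 P1]].
  set (c := Rmin d1 (1/2) / 2).
  assert (m1 := Rmin_l d1 (1/2)). assert (m2 := Rmin_r d1 (1/2)).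
  assert (Hpos : 0 < Rmin d1 (1/2)) by (apply Rmin_pos; lra).
  destruct (I1 c (1 - c) ltac:(unfold c; lra) ltac:(unfold c; lra) ltac:(unfold c; lra)) as [pr _].
  specialize (P1 c (1 - c) pr ltac:(unfold c; lra) ltac:(unfold c; lra) ltac:(unfold c; lra) ltac:(unfold c; lra) ltac:(unfold c; lra)).
  pose proof (RI_of_cont (fun x => M * Dk x) c (1 - c) (cont01_scal _ _ cont01_Dk)
      ltac:(unfold c; lra) ltac:(unfold c; lra) ltac:(unfold c; lra)) as pM.
  pose proof (RI_of_cont (fun x => - M * Dk x) c (1 - c) (cont01_scal _ _ cont01_Dk)
      ltac:(unfold c; lra) ltac:(unfold c; lra) ltac:(unfold c; lra)) as pm.
  assert (A1 : RiemannInt pr <= RiemannInt pM).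
  { apply RiemannInt_P19. unfold c; lra. intros x Hx. specialize (HM x ltac:(unfold c in *; lra)).
    apply Rabs_le_inv in HM; lra. }
  assert (A2 : RiemannInt pm <= RiemannInt pr).
  { apply RiemannInt_P19. unfold c; lra. intros x Hx. specialize (HM x ltac:(unfold c in *; lra)).
    apply Rabs_le_inv in HM; lra. }
  rewrite <- (RInt_eq _ _ _ pM) in A1. rewrite <- (RInt_eq _ _ _ pm) in A2.
  rewrite RInt_scal in A1, A2; try apply cont01_Dk; try (unfold c; lra).
  pose proof (RInt_Dk_bound c (1 - c) ltac:(unfold c; lra) ltac:(unfold c; lra) ltac:(unfold c; lra)).
  assert (Rabs (RiemannInt pr) <= 8 * M) by (apply Rabs_le_intro; nra).
  assert (Rabs L <= Rabs (RiemannInt pr) + Rabs (RiemannInt pr - L)).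
  { replace L with (RiemannInt pr - (RiemannInt pr - L)) at 1 by ring. apply Rabs_sub_tr. }
  unfold eps in *; lra.
Qed.

Lemma improper_pos f L : cont01 f -> (forall s, 0 < s < 1 -> 0 < f s) ->
  improper_int f 0 1 L -> 0 < L.
Proof.
  intros Hf Hp [I1 H1].
  destruct (continuity_ab_min f (1/4) (3/4) ltac:(lra) ltac:(intros; apply Hf; lra)) as [mn [Hmn Hmn2]].
  set (m := f mn). assert (Hm : 0 < m) by (apply Hp; lra).
  destruct (H1 (m/4) ltac:(lra)) as [d1 [Hd1 P1]].
  set (c := Rmin d1 (1/4) / 2).
  assert (m1 := Rmin_l d1 (1/4)). assert (m2 := Rmin_r d1 (1/4)).
  assert (Hpos : 0 < Rmin d1 (1/4)) by (apply Rmin_pos; lra).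
  destruct (I1 c (1 - c) ltac:(unfold c; lra) ltac:(unfold c; lra) ltac:(unfold c; lra)) as [pr _].
  specialize (P1 c (1 - c) pr ltac:(unfold c; lra) ltac:(unfold c; lra) ltac:(unfold c; lra) ltac:(unfold c; lra) ltac:(unfold c; lra)).
  rewrite <- (RInt_eq _ _ _ pr) in P1.
  rewrite <- (RInt_chasles f c (1/4) (1 - c)) in P1; try (unfold c; lra); auto.
  rewrite <- (RInt_chasles f (1/4) (3/4) (1 - c)) in P1; try (unfold c; lra); auto.
  assert (0 <= RInt f c (1/4)) by (apply RInt_nonneg; auto; try (unfold c; lra); intros; apply Rlt_le, Hp; unfold c in *; lra).
  assert (0 <= RInt f (3/4) (1 - c)) by (apply RInt_nonneg; auto; try (unfold c; lra); intros; apply Rlt_le, Hp; unfold c in *; lra).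
  assert (m * (3/4 - 1/4) <= RInt f (1/4) (3/4)).
  { rewrite <- RInt_const. apply RInt_le; auto; try lra. apply cont01_const.
    intros x Hx. apply Hmn; lra. }
  apply Rabs_def2 in P1. lra.
Qed.

Definition sre (X Y : R) : R := sqrt ((sqrt (X ^ 2 + Y ^ 2) + X) / 2).
Definition sim (X Y : R) : R := Y / (2 * sre X Y).

Lemma good_pos X Y : (Y <> 0 \/ 0 < X) -> 0 < sqrt (X ^ 2 + Y ^ 2) + X.
Proof.
  intros H. assert (Hs := sqrt_pos (X^2 + Y^2)).
  assert (Hsq : sqrt (X^2+Y^2) * sqrt (X^2+Y^2) = X^2 + Y^2) by (apply sqrt_sqrt; nra).
  destruct H as [H|H].
  - assert (0 < Y * Y) by (apply Rsqr_pos_lt; auto). nra.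
  - nra.
Qed.

Lemma csqrt_props X Y : 0 < sqrt (X ^ 2 + Y ^ 2) + X ->
  0 < sre X Y /\ sre X Y ^ 2 - sim X Y ^ 2 = X /\ 2 * sre X Y * sim X Y = Y.
Proof.
  intros H. unfold sim, sre.
  set (m := sqrt (X^2+Y^2)) in *.
  assert (Hm := sqrt_pos (X^2 + Y^2)). fold m in Hm.
  assert (Hsq : m * m = X^2 + Y^2) by (apply sqrt_sqrt; nra).
  assert (Hr : 0 < sqrt ((m + X) / 2)) by (apply sqrt_lt_R0; lra).
  assert (Hr2 : sqrt ((m + X) / 2) * sqrt ((m + X) / 2) = (m + X) / 2) by (apply sqrt_sqrt; lra).
  set (r := sqrt ((m + X) / 2)) in *.
  split; [auto|split].
  - replace ((Y / (2 * r)) ^ 2) with (Y^2 / (4 * (r * r))) by (field; lra).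
    rewrite Hr2. replace (r ^ 2) with (r * r) by ring. rewrite Hr2.
    field_simplify; try lra. replace (4 * m ^ 2 + 8 * m * X + 4 * X ^ 2 - 4 * Y ^ 2) with (X * (8 * m + 8 * X)) by (replace (m^2) with (m*m) by ring; rewrite Hsq; ring). field; lra.
  - field; lra.
Qed.

Lemma Q_pos r i X y0 ur ui : 0 < r -> 0 < y0 -> 0 < ui ->
  r ^ 2 - i ^ 2 = X * ur + y0 * ui -> 2 * r * i = X * ui - y0 * ur ->
  0 < ui * r - ur * i /\ (r ^ 2 + i ^ 2) * ui ^ 2 <= 4 * (ui * r - ur * i) ^ 2.
Proof.
  intros Hr Hy Hu E1 E2.
  set (P := i * X + r * y0). set (Q := ui * r - ur * i). set (N := r^2 + i^2). set (W2 := X^2 + y0^2).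
  assert (HP : 2 * r * P = W2 * ui + N * y0).
  { assert (H : 2*r*P - (W2*ui + N*y0) = X*(2*r*i - (X*ui - y0*ur)) + y0*((r^2-i^2) - (X*ur + y0*ui)))
      by (unfold P, W2, N; ring).
    rewrite E1, E2 in H. lra. }
  assert (HQ : Q * W2 = N * P).
  { assert (H : Q * W2 - N * P = ((X*ur + y0*ui) - (r^2 - i^2)) * (y0*r - X*i)
                   + ((X*ui - y0*ur) - 2*r*i) * (X*r + y0*i)) by (unfold Q, W2, N, P; ring).
    rewrite E1, E2 in H. lra. }
  assert (HW : 0 < W2) by (unfold W2; nra).
  assert (HN : 0 < N) by (unfold N; nra).
  assert (HPp : 0 < P) by nra.
  assert (HQp : 0 < Q) by nra.
  split; auto.
  assert (H1 : N * ui <= 2 * r * Q).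
  { apply Rmult_le_reg_r with W2; auto.
    assert (E : 2*r*Q*W2 = N*(2*r*P)) by (replace (2*r*Q*W2) with (2*r*(Q*W2)) by ring; rewrite HQ; ring).
    rewrite E, HP. nra. }
  assert (H2 : r ^ 2 <= N) by (unfold N; nra).
  assert (H0 : 0 <= N * ui) by nra.
  assert (H3 : 0 <= (2*r*Q - N*ui) * (2*r*Q + N*ui)) by (apply Rmult_le_pos; lra).
  assert (H4 : N^2 * ui^2 <= 4 * r^2 * Q^2) by nra.
  assert (H5 : 4 * r^2 * Q^2 <= 4 * N * Q^2) by (apply Rmult_le_compat_r; nra).
  assert (H6 : N * (N * ui^2) <= N * (4 * Q^2)) by nra.
  apply Rmult_le_reg_l with N; auto.
Qed.

Lemma Rmult_le_0_r_alt a b : a <= 0 -> 0 <= b -> a * b <= 0.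
Proof. intros; nra. Qed.

Lemma mono_alg r1 i1 r2 i2 X1 X2 y0 ur ui : 0 < r1 -> 0 < r2 -> 0 < y0 -> 0 < ui ->
  r1 ^ 2 - i1 ^ 2 = X1 * ur + y0 * ui -> 2 * r1 * i1 = X1 * ui - y0 * ur ->
  r2 ^ 2 - i2 ^ 2 = X2 * ur + y0 * ui -> 2 * r2 * i2 = X2 * ui - y0 * ur ->
  X2 < X1 -> i2 < i1.
Proof.
  intros Hr1 Hr2 Hy Hu E1 E2 E3 E4 HX.
  destruct (Q_pos r1 i1 X1 y0 ur ui) as [Q1 _]; auto.
  destruct (Q_pos r2 i2 X2 y0 ur ui) as [Q2 _]; auto.
  assert (H : (i1 - i2) * ((r1+r2)^2 + (i1+i2)^2) =
     (2*r1*i1 - 2*r2*i2) * (r1 + r2) - ((r1^2 - i1^2) - (r2^2 - i2^2)) * (i1 + i2)) by ring.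
  rewrite E1, E2, E3, E4 in H.
  assert (H' : (i1 - i2) * ((r1+r2)^2 + (i1+i2)^2) = (X1 - X2) * ((ui * r1 - ur * i1) + (ui * r2 - ur * i2)))
    by (rewrite H; ring).
  assert (HS : 0 < (r1+r2)^2 + (i1+i2)^2) by (apply Rplus_lt_le_0_compat; [apply pow_lt|apply pow2_ge_0]; lra).
  assert (HT : 0 < (X1 - X2) * ((ui * r1 - ur * i1) + (ui * r2 - ur * i2))) by (apply Rmult_lt_0_compat; lra).
  rewrite <- H' in HT.
  destruct (Rlt_dec i2 i1) as [|Hn]; auto. exfalso.
  assert ((i1 - i2) * ((r1+r2)^2 + (i1+i2)^2) <= 0); [|lra].
  apply Rmult_le_0_r_alt; lra.
Qed.

Lemma lip_alg r1 i1 r2 i2 X1 X2 y0 ur ui : 0 < r1 -> 0 < r2 -> 0 < y0 -> 0 < ui ->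
  r1 ^ 2 - i1 ^ 2 = X1 * ur + y0 * ui -> 2 * r1 * i1 = X1 * ui - y0 * ur ->
  r2 ^ 2 - i2 ^ 2 = X2 * ur + y0 * ui -> 2 * r2 * i2 = X2 * ui - y0 * ur ->
  (i1 - i2) ^ 2 * ((r1 ^ 2 + i1 ^ 2) * ui ^ 2) <= 4 * (X1 - X2) ^ 2 * (ur ^ 2 + ui ^ 2) ^ 2.
Proof.
  intros Hr1 Hr2 Hy Hu E1 E2 E3 E4.
  destruct (Q_pos r1 i1 X1 y0 ur ui) as [Q1 B1]; auto.
  destruct (Q_pos r2 i2 X2 y0 ur ui) as [Q2 _]; auto.
  set (sr := r1 + r2). set (si := i1 + i2). set (mr := r1 - r2). set (mi := i1 - i2).
  set (d := X1 - X2). set (U2 := ur^2 + ui^2).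
  assert (Re : mr * sr - mi * si = d * ur).
  { assert (H : mr * sr - mi * si = (r1^2 - i1^2) - (r2^2 - i2^2)) by (unfold mr, sr, mi, si; ring).
    rewrite E1, E3 in H. rewrite H. unfold d; ring. }
  assert (Im : mr * si + mi * sr = d * ui).
  { assert (H : mr * si + mi * sr = 2*r1*i1 - 2*r2*i2) by (unfold mr, sr, mi, si; ring).
    rewrite E2, E4 in H. rewrite H. unfold d; ring. }
  assert (Hms : (mr^2 + mi^2) * (sr^2 + si^2) = d^2 * U2).
  { replace ((mr^2 + mi^2) * (sr^2 + si^2)) with ((mr * sr - mi * si)^2 + (mr * si + mi * sr)^2) by ring.
    rewrite Re, Im. unfold U2; ring. }
  assert (Hsum : ui * sr - ur * si = (ui * r1 - ur * i1) + (ui * r2 - ur * i2)) by (unfold sr, si; ring).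
  assert (CS : (ui * sr - ur * si)^2 <= U2 * (sr^2 + si^2)).
  { assert (U2 * (sr^2 + si^2) - (ui * sr - ur * si)^2 = (ui * si + ur * sr)^2) by (unfold U2; ring).
    pose proof (pow2_ge_0 (ui * si + ur * sr)); lra. }
  set (Q := ui * r1 - ur * i1) in *.
  assert (HQ2 : Q^2 <= U2 * (sr^2 + si^2)).
  { rewrite Hsum in CS. set (Q' := ui * r2 - ur * i2) in *.
    assert (Q^2 <= (Q + Q')^2) by nra. lra. }
  set (S := sr^2 + si^2) in *.
  assert (HS : 0 <= S) by (unfold S; nra).
  assert (Hmi : mi^2 <= mr^2 + mi^2) by nra.
  set (N := r1^2 + i1^2) in *.
  assert (HN : 0 <= N) by (unfold N; nra).
  assert (A1 : mi^2 * (N * ui^2) <= mi^2 * (4 * Q^2)) by (apply Rmult_le_compat_l; nra).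
  assert (A2 : mi^2 * (4 * Q^2) <= (mr^2 + mi^2) * (4 * (U2 * S))) by
    (apply Rmult_le_compat; nra).
  replace ((mr^2 + mi^2) * (4 * (U2 * S))) with (4 * U2 * ((mr^2 + mi^2) * S)) in A2 by ring.
  rewrite Hms in A2. fold d. fold U2. nra.
Qed.

Definition nv (a e s : R) : R := (s - a) ^ 2 + e ^ 2.
Definition urf (a e s : R) : R := (s - a) / nv a e s.
Definition uif (a e s : R) : R := e / nv a e s.
Definition Gx (a e y0 x s : R) : R := (s - x) * urf a e s + y0 * uif a e s.
Definition Gy (a e y0 x s : R) : R := (s - x) * uif a e s - y0 * urf a e s.
Definition rho (a e y0 x s : R) : R := sre (Gx a e y0 x s) (Gy a e y0 x s).
Definition iota (a e y0 x s : R) : R := sim (Gx a e y0 x s) (Gy a e y0 x s).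
Definition Fi (a e y0 x s : R) : R := iota a e y0 x s * Dk s.
Definition Fr (a e y0 x s : R) : R := rho a e y0 x s * Dk s.

Lemma nv_pos a e s : 0 < e -> 0 < nv a e s.
Proof. intros; unfold nv; apply Rplus_le_lt_0_compat; [apply pow2_ge_0|apply pow_lt; lra]. Qed.

Lemma G_good a e y0 x s : 0 < e -> 0 < y0 ->
  0 < sqrt (Gx a e y0 x s ^ 2 + Gy a e y0 x s ^ 2) + Gx a e y0 x s.
Proof.
  intros He Hy. apply good_pos.
  destruct (Req_dec (Gy a e y0 x s) 0) as [H|H]; [right|left; auto].
  pose proof (nv_pos a e s He) as Hn.
  unfold Gx, Gy, urf, uif in *. set (n := nv a e s) in *.
  assert (H' : (s - x) * e = y0 * (s - a)).
  { assert (E : (s - x) * e - y0 * (s - a) = ((s - x) * (e / n) - y0 * ((s - a) / n)) * n) by (field; lra).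
    rewrite H, Rmult_0_l in E. lra. }
  apply Rmult_lt_reg_r with (e * n). apply Rmult_lt_0_compat; lra.
  rewrite Rmult_0_l.
  replace (((s - x) * ((s - a) / n) + y0 * (e / n)) * (e * n)) with ((s - x) * e * (s - a) + y0 * e * e)
    by (field; lra).
  rewrite H'. assert (0 <= y0*((s-a)*(s-a))) by (apply Rmult_le_pos; [lra|apply Rle_0_sqr]). assert (0 < y0*(e*e)) by (apply Rmult_lt_0_compat; [lra|apply Rmult_lt_0_compat; lra]). lra.
Qed.

Lemma rho_props a e y0 x s : 0 < e -> 0 < y0 ->
  0 < rho a e y0 x s /\ rho a e y0 x s ^ 2 - iota a e y0 x s ^ 2 = Gx a e y0 x s /\
  2 * rho a e y0 x s * iota a e y0 x s = Gy a e y0 x s.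
Proof. intros. apply csqrt_props, G_good; auto. Qed.

Lemma cont_rho a e y0 x s : 0 < e -> 0 < y0 -> continuity_pt (rho a e y0 x) s.
Proof.
  intros He Hy. pose proof (G_good a e y0 x s He Hy) as Hg. pose proof (nv_pos a e s He) as Hn.
  unfold rho, sre, Gx, Gy, urf, uif in *. unfold nv in *.
  reg; try lra; try (apply Rgt_not_eq; lra).
  apply Rplus_le_le_0_compat; apply pow2_ge_0.
Qed.

Lemma cont_iota a e y0 x s : 0 < e -> 0 < y0 -> continuity_pt (iota a e y0 x) s.
Proof.
  intros He Hy. unfold iota, sim.
  apply continuity_pt_div.
  - pose proof (nv_pos a e s He) as Hn. unfold Gy, urf, uif, nv in *. reg; apply Rgt_not_eq; lra.
  - apply continuity_pt_mult. apply continuity_pt_const; intros ? ?; reflexivity. apply cont_rho; auto.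
  - destruct (rho_props a e y0 x s He Hy) as [H _]. unfold rho in H. apply Rgt_not_eq; lra.
Qed.

Lemma cont01_Fi a e y0 x : 0 < e -> 0 < y0 -> cont01 (Fi a e y0 x).
Proof.
  intros He Hy s Hs. unfold Fi. apply continuity_pt_mult. apply cont_iota; auto. apply cont01_Dk; auto.
Qed.

Lemma cont01_Fr a e y0 x : 0 < e -> 0 < y0 -> cont01 (Fr a e y0 x).
Proof.
  intros He Hy s Hs. unfold Fr. apply continuity_pt_mult. apply cont_rho; auto. apply cont01_Dk; auto.
Qed.

Lemma abs_from_4 y K : 0 <= K -> y ^ 4 <= K -> Rabs y <= 1 + K.
Proof.
  intros HK H. destruct (Rle_dec (Rabs y) (1 + K)) as [|Hn]; auto. exfalso.
  set (z := Rabs y) in *. assert (Hz2 : z ^ 2 = y ^ 2) by (unfold z; rewrite <- Rsqr_pow2, <- Rsqr_abs, Rsqr_pow2; auto).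
  assert (z ^ 4 = y ^ 4) by (replace (z^4) with ((z^2)^2) by ring; rewrite Hz2; ring).
  assert (1 < z) by lra.
  assert (z < z ^ 2) by nra.
  assert (z ^ 2 < z ^ 4) by nra.
  lra.
Qed.

Definition Mb (e y0 x : R) : R := 1 + (2 + 2 * x ^ 2 + y0 ^ 2) / e ^ 2.

Lemma N2_eq a e y0 x s : 0 < e ->
  Gx a e y0 x s ^ 2 + Gy a e y0 x s ^ 2 = ((s - x) ^ 2 + y0 ^ 2) / nv a e s.
Proof.
  intros He. pose proof (nv_pos a e s He). unfold Gx, Gy, urf, uif. unfold nv in *. field. lra.
Qed.

Lemma bound_ri a e y0 x s : 0 < e -> 0 < y0 -> 0 < s < 1 ->
  Rabs (iota a e y0 x s) <= Mb e y0 x /\ Rabs (rho a e y0 x s) <= Mb e y0 x.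
Proof.
  intros He Hy Hs. destruct (rho_props a e y0 x s He Hy) as [Hr [E1 E2]].
  set (r := rho a e y0 x s) in *. set (i := iota a e y0 x s) in *.
  assert (HN : (r^2 + i^2)^2 = Gx a e y0 x s ^ 2 + Gy a e y0 x s ^ 2).
  { rewrite <- E1, <- E2. ring. }
  rewrite N2_eq in HN; auto.
  pose proof (nv_pos a e s He) as Hn.
  assert (Hnv : e^2 <= nv a e s) by (unfold nv; pose proof (pow2_ge_0 (s-a)); lra).
  assert (He2 : 0 < e^2) by (apply pow_lt; lra).
  set (K := (2 + 2 * x ^ 2 + y0 ^ 2) / e ^ 2).
  assert (HK0 : 0 <= K) by (unfold K; apply Rmult_le_pos; [nra|apply Rlt_le, Rinv_0_lt_compat; auto]).
  assert (HW : (s - x)^2 + y0^2 <= 2 + 2 * x^2 + y0^2) by (pose proof (pow2_ge_0 (s+x)); assert (s^2 <= 1) by (simpl; nra); assert ((s-x)^2 + (s+x)^2 = 2*s^2+2*x^2) by ring; lra).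
  assert (HNK : (r^2+i^2)^2 <= K).
  { rewrite HN. unfold K. apply (Rle_trans _ (((s - x) ^ 2 + y0 ^ 2) / e^2)).
    - apply Rmult_le_compat_l. pose proof (pow2_ge_0 (s-x)); pose proof (pow2_ge_0 y0); lra. apply Rinv_le_contravar; auto.
    - apply Rmult_le_compat_r. apply Rlt_le, Rinv_0_lt_compat; auto. auto. }
  unfold Mb. fold K. split; apply abs_from_4; auto.
  - assert ((r^2+i^2)^2 = i^4 + r^2*(r^2 + 2*i^2)) by ring.
    assert (0 <= r^2*(r^2 + 2*i^2)) by (apply Rmult_le_pos; pose proof (pow2_ge_0 r); pose proof (pow2_ge_0 i); lra). lra.
  - assert ((r^2+i^2)^2 = r^4 + i^2*(i^2 + 2*r^2)) by ring.
    assert (0 <= i^2*(i^2 + 2*r^2)) by (apply Rmult_le_pos; pose proof (pow2_ge_0 r); pose proof (pow2_ge_0 i); lra). lra.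
Qed.

Lemma bound_Fi a e y0 x s : 0 < e -> 0 < y0 -> 0 < s < 1 ->
  Rabs (Fi a e y0 x s) <= Mb e y0 x * Dk s.
Proof.
  intros. unfold Fi. rewrite Rabs_mult, (Rabs_right (Dk s)).
  apply Rmult_le_compat_r. apply Rlt_le, Dk_pos; auto. apply bound_ri; auto.
  apply Rle_ge, Rlt_le, Dk_pos; auto.
Qed.

Lemma bound_Fr a e y0 x s : 0 < e -> 0 < y0 -> 0 < s < 1 ->
  Rabs (Fr a e y0 x s) <= Mb e y0 x * Dk s.
Proof.
  intros. unfold Fr. rewrite Rabs_mult, (Rabs_right (Dk s)).
  apply Rmult_le_compat_r. apply Rlt_le, Dk_pos; auto. apply bound_ri; auto.
  apply Rle_ge, Rlt_le, Dk_pos; auto.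
Qed.

Lemma uif_pos a e s : 0 < e -> 0 < uif a e s.
Proof. intros; unfold uif; apply Rdiv_lt_0_compat; auto; apply nv_pos; auto. Qed.

Lemma mono_iota a e y0 x1 x2 s : 0 < e -> 0 < y0 -> x1 < x2 ->
  iota a e y0 x2 s < iota a e y0 x1 s.
Proof.
  intros He Hy Hx.
  destruct (rho_props a e y0 x1 s He Hy) as [Hr1 [E1 E2]].
  destruct (rho_props a e y0 x2 s He Hy) as [Hr2 [E3 E4]].
  unfold Gx, Gy in *.
  apply (mono_alg (rho a e y0 x1 s) _ (rho a e y0 x2 s) _ (s - x1) (s - x2) y0 (urf a e s) (uif a e s)); auto.
  apply uif_pos; auto. lra.
Qed.

Definition Kl (a e y0 : R) : R := 1 + 4 * sqrt (2 + 2 * a ^ 2 + e ^ 2) / (y0 * e ^ 2).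

Lemma sq_lt a b : 0 <= a < b -> a ^ 2 < b ^ 2.
Proof. intros [H1 H2]. simpl. rewrite !Rmult_1_r. apply Rmult_le_0_lt_compat; lra. Qed.

Lemma abs_from_2 m d C : 0 <= C -> m ^ 2 <= d ^ 2 * C -> Rabs m <= Rabs d * (1 + C).
Proof.
  intros HC H. destruct (Rle_dec (Rabs m) (Rabs d * (1 + C))) as [|Hn]; auto. exfalso.
  assert (Hm2 : Rabs m ^ 2 = m ^ 2) by (rewrite <- Rsqr_pow2, <- Rsqr_abs, Rsqr_pow2; auto).
  assert (Hd2 : Rabs d ^ 2 = d ^ 2) by (rewrite <- Rsqr_pow2, <- Rsqr_abs, Rsqr_pow2; auto).
  pose proof (Rabs_pos d). pose proof (Rabs_pos m).
  assert (A : (Rabs d * (1 + C)) ^ 2 < Rabs m ^ 2).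
  { apply sq_lt; split; [apply Rmult_le_pos; lra|lra]. }
  assert (B : d ^ 2 * C <= (Rabs d * (1 + C)) ^ 2).
  { rewrite <- Hd2. replace ((Rabs d * (1 + C)) ^ 2) with (Rabs d ^ 2 * (1 + 2 * C + C^2)) by ring.
    apply Rmult_le_compat_l. apply pow2_ge_0. pose proof (pow2_ge_0 C). lra. }
  lra.
Qed.

Lemma lip_iota a e y0 x1 x2 s : 0 < e -> 0 < y0 -> 0 < s < 1 ->
  Rabs (iota a e y0 x1 s - iota a e y0 x2 s) <= Kl a e y0 * Rabs (x1 - x2).
Proof.
  intros He Hy Hs.
  destruct (rho_props a e y0 x1 s He Hy) as [Hr1 [E1 E2]].
  destruct (rho_props a e y0 x2 s He Hy) as [Hr2 [E3 E4]].
  assert (HN : (rho a e y0 x1 s ^ 2 + iota a e y0 x1 s ^ 2) ^ 2 = Gx a e y0 x1 s ^ 2 + Gy a e y0 x1 s ^ 2)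
    by (rewrite <- E1, <- E2; ring).
  rewrite N2_eq in HN; auto.
  unfold Gx, Gy in *.
  pose proof (lip_alg _ _ _ _ (s - x1) (s - x2) y0 (urf a e s) (uif a e s) Hr1 Hr2 Hy (uif_pos a e s He) E1 E2 E3 E4) as L.
  set (r1 := rho a e y0 x1 s) in *. set (i1 := iota a e y0 x1 s) in *. set (i2 := iota a e y0 x2 s) in *.
  pose proof (nv_pos a e s He) as Hn.
  assert (HU : urf a e s ^ 2 + uif a e s ^ 2 = / nv a e s) by (clear -Hn; unfold urf, uif, nv in *; field; lra).
  set (n := nv a e s) in *.
  rewrite HU in L. unfold uif in L. fold n in L.
  set (N1 := r1 ^ 2 + i1 ^ 2) in *.
  assert (HN1 : 0 < N1) by (unfold N1; pose proof (pow2_ge_0 i1); assert (0 < r1^2) by (apply pow_lt; lra); lra).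
  assert (L2 : (i1 - i2) ^ 2 * N1 * e^2 <= 4 * (x1 - x2) ^ 2).
  { replace ((s - x1 - (s - x2))) with (x2 - x1) in L by ring.
    replace ((i1 - i2) ^ 2 * (N1 * (e / n) ^ 2)) with (((i1 - i2) ^ 2 * N1 * e^2) * (/ n)^2) in L by (field; lra).
    replace (4 * (x2 - x1) ^ 2 * (/ n) ^ 2) with ((4 * (x1 - x2) ^ 2) * (/ n)^2) in L by ring.
    apply Rmult_le_reg_r with ((/ n)^2); auto. apply pow_lt, Rinv_0_lt_compat; auto. }
  set (Nm := 2 + 2 * a ^ 2 + e ^ 2).
  assert (HnNm : n <= Nm).
  { unfold n, nv, Nm. assert ((s-a)^2 + (s+a)^2 = 2*s^2 + 2*a^2) by ring.
    pose proof (pow2_ge_0 (s+a)). assert (s^2 <= 1) by (simpl; nra). lra. }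
  assert (HNm : 0 < Nm) by lra.
  assert (HN1b : y0 ^ 2 / Nm <= N1 ^ 2).
  { rewrite HN. apply (Rle_trans _ (y0^2 / n)).
    - apply Rmult_le_compat_l. apply pow2_ge_0. apply Rinv_le_contravar; auto.
    - apply Rmult_le_compat_r. apply Rlt_le, Rinv_0_lt_compat; auto. pose proof (pow2_ge_0 (s - x1)); lra. }
  set (n0 := y0 / sqrt Nm).
  assert (Hsq : 0 < sqrt Nm) by (apply sqrt_lt_R0; auto).
  assert (Hn0 : 0 < n0) by (unfold n0; apply Rdiv_lt_0_compat; auto).
  assert (Hn0N : n0 <= N1).
  { assert (n0 ^ 2 <= N1 ^ 2).
    { unfold n0. replace ((y0 / sqrt Nm) ^ 2) with (y0 ^ 2 / (sqrt Nm * sqrt Nm)) by (field; lra).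
      rewrite sqrt_sqrt; lra. }
    destruct (Rle_dec n0 N1) as [|Hne]; auto. exfalso.
    assert (N1 ^ 2 < n0 ^ 2) by (apply sq_lt; lra). lra. }
  set (C := 4 / (n0 * e ^ 2)).
  assert (He2 : 0 < e ^ 2) by (apply pow_lt; lra).
  assert (HC : 0 <= C) by (unfold C; apply Rlt_le, Rdiv_lt_0_compat; [lra|apply Rmult_lt_0_compat; auto]).
  assert (Hm : (i1 - i2) ^ 2 <= (x1 - x2) ^ 2 * C).
  { unfold C. apply Rmult_le_reg_r with (n0 * e^2). apply Rmult_lt_0_compat; auto.
    replace ((x1 - x2) ^ 2 * (4 / (n0 * e ^ 2)) * (n0 * e ^ 2)) with (4 * (x1 - x2) ^ 2) by (field; lra).
    apply (Rle_trans _ ((i1 - i2) ^ 2 * N1 * e ^ 2)); auto.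
    replace ((i1 - i2) ^ 2 * (n0 * e ^ 2)) with (((i1 - i2) ^ 2 * e^2) * n0) by ring.
    replace ((i1 - i2) ^ 2 * N1 * e ^ 2) with (((i1 - i2) ^ 2 * e^2) * N1) by ring.
    apply Rmult_le_compat_l; auto. apply Rmult_le_pos; apply pow2_ge_0. }
  pose proof (abs_from_2 (i1 - i2) (x1 - x2) C HC Hm) as R.
  replace (Kl a e y0) with (1 + C). lra.
  unfold Kl, C, n0. fold Nm. field. split; lra.
Qed.

Lemma iota_lo a e y0 s : 0 < e -> 0 < y0 < e -> 0 < s < 1 -> 0 < iota a e y0 (y0 * a / e) s.
Proof.
  intros He Hy Hs. destruct (rho_props a e y0 (y0 * a / e) s He ltac:(lra)) as [Hr _].
  unfold iota, sim. fold (rho a e y0 (y0 * a / e) s).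
  apply Rdiv_lt_0_compat; [|lra].
  pose proof (nv_pos a e s He). unfold Gy, urf, uif.
  replace ((s - y0 * a / e) * (e / nv a e s) - y0 * ((s - a) / nv a e s)) with (s * (e - y0) / nv a e s)
    by (field; lra).
  apply Rdiv_lt_0_compat; auto. apply Rmult_lt_0_compat; lra.
Qed.

Lemma iota_hi a e y0 s : 0 < e -> 0 < y0 < e -> 0 < s < 1 ->
  iota a e y0 (y0 * a / e + 1 - y0 / e) s < 0.
Proof.
  intros He Hy Hs. destruct (rho_props a e y0 (y0 * a / e + 1 - y0 / e) s He ltac:(lra)) as [Hr _].
  unfold iota, sim. fold (rho a e y0 (y0 * a / e + 1 - y0 / e) s).
  pose proof (nv_pos a e s He). unfold Gy, urf, uif.
  replace ((s - (y0 * a / e + 1 - y0 / e)) * (e / nv a e s) - y0 * ((s - a) / nv a e s)) with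
    (- ((1 - s) * (e - y0) / nv a e s)) by (field; lra).
  unfold Rdiv at 1. rewrite Ropp_mult_distr_l_reverse.
  apply Ropp_lt_gt_0_contravar. apply Rmult_lt_0_compat.
  apply Rdiv_lt_0_compat; auto. apply Rmult_lt_0_compat; lra.
  apply Rinv_0_lt_compat; lra.
Qed.

Definition J (a e y0 x : R) : R :=
  match excluded_middle_informative (exists L, improper_int (Fi a e y0 x) 0 1 L) with
  | left H => proj1_sig (constructive_indefinite_description _ H)
  | right _ => 0 end.

Lemma J_spec a e y0 x : 0 < e -> 0 < y0 -> improper_int (Fi a e y0 x) 0 1 (J a e y0 x).
Proof.
  intros He Hy. unfold J. destruct excluded_middle_informative as [H|H].
  - exact (proj2_sig (constructive_indefinite_description _ H)).
  - exfalso; apply H. apply (improper_exists _ (Mb e y0 x)).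
    apply cont01_Fi; auto. intros; apply bound_Fi; auto.
Qed.

Lemma Kl_pos a e y0 : 0 < e -> 0 < y0 -> 0 < Kl a e y0.
Proof.
  intros. unfold Kl. assert (0 <= sqrt (2 + 2 * a ^ 2 + e ^ 2)) by apply sqrt_pos.
  assert (0 < y0 * e^2) by (apply Rmult_lt_0_compat; auto; apply pow_lt; auto).
  assert (0 <= 4 * sqrt (2 + 2 * a ^ 2 + e ^ 2) / (y0 * e ^ 2)) by (apply Rmult_le_pos; [lra|apply Rlt_le, Rinv_0_lt_compat; auto]).
  lra.
Qed.

Lemma J_lip a e y0 x1 x2 : 0 < e -> 0 < y0 ->
  Rabs (J a e y0 x1 - J a e y0 x2) <= 8 * (Kl a e y0 * Rabs (x1 - x2)).
Proof.
  intros He Hy.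
  pose proof (improper_lin _ _ (-1) _ _ (J_spec a e y0 x1 He Hy) (J_spec a e y0 x2 He Hy)) as H.
  replace (J a e y0 x1 - J a e y0 x2) with (J a e y0 x1 + -1 * J a e y0 x2) by ring.
  apply (improper_bound _ _ _ H).
  intros s Hs. replace (Fi a e y0 x1 s + -1 * Fi a e y0 x2 s) with
    ((iota a e y0 x1 s - iota a e y0 x2 s) * Dk s) by (unfold Fi; ring).
  rewrite Rabs_mult, (Rabs_right (Dk s)) by (apply Rle_ge, Rlt_le, Dk_pos; auto).
  apply Rmult_le_compat_r. apply Rlt_le, Dk_pos; auto. apply lip_iota; auto.
Qed.

Lemma J_cont a e y0 x : 0 < e -> 0 < y0 -> continuity_pt (J a e y0) x.
Proof.
  intros He Hy. pose proof (Kl_pos a e y0 He Hy) as HK.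
  unfold continuity_pt, continue_in, limit1_in, limit_in. simpl. unfold R_dist.
  intros eps Heps. exists (eps / (8 * Kl a e y0 + 1)). split.
  - apply Rdiv_lt_0_compat; lra.
  - intros x' [_ Hx']. eapply Rle_lt_trans. apply J_lip; auto.
    apply (Rle_lt_trans _ ((8 * Kl a e y0 + 1) * Rabs (x' - x))).
    + pose proof (Rabs_pos (x' - x)). nra.
    + apply Rmult_lt_reg_r with (/ (8 * Kl a e y0 + 1)). apply Rinv_0_lt_compat; lra.
      replace ((8 * Kl a e y0 + 1) * Rabs (x' - x) * / (8 * Kl a e y0 + 1)) with (Rabs (x' - x)) by (field; lra).
      exact Hx'.
Qed.

Lemma J_strict a e y0 x1 x2 : 0 < e -> 0 < y0 -> x1 < x2 -> J a e y0 x2 < J a e y0 x1.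
Proof.
  intros He Hy Hx.
  pose proof (improper_lin _ _ (-1) _ _ (J_spec a e y0 x1 He Hy) (J_spec a e y0 x2 He Hy)) as H.
  apply improper_pos in H. lra.
  - apply cont01_lin; apply cont01_Fi; auto.
  - intros s Hs. unfold Fi. pose proof (mono_iota a e y0 x1 x2 s He Hy Hx). pose proof (Dk_pos s Hs). nra.
Qed.

Lemma J_lo a e y0 : 0 < e -> 0 < y0 < e -> 0 < J a e y0 (y0 * a / e).
Proof.
  intros He Hy. apply (improper_pos (Fi a e y0 (y0 * a / e))).
  - apply cont01_Fi; lra.
  - intros s Hs. unfold Fi. apply Rmult_lt_0_compat. apply iota_lo; auto. apply Dk_pos; auto.
  - apply J_spec; lra.
Qed.

Lemma J_hi a e y0 : 0 < e -> 0 < y0 < e -> J a e y0 (y0 * a / e + 1 - y0 / e) < 0.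
Proof.
  intros He Hy. set (x := y0 * a / e + 1 - y0 / e).
  pose proof (improper_lin _ _ (-2) _ _ (J_spec a e y0 x He ltac:(lra)) (J_spec a e y0 x He ltac:(lra))) as H.
  apply improper_pos in H. lra.
  - apply cont01_lin; apply cont01_Fi; lra.
  - intros s Hs. unfold Fi. pose proof (iota_hi a e y0 s He Hy Hs). pose proof (Dk_pos s Hs). fold x in H0. nra.
Qed.

Lemma J_root a e y0 : 0 < e -> 0 < y0 < e ->
  exists x, y0 * a / e <= x <= y0 * a / e + 1 - y0 / e /\ J a e y0 x = 0 /\
    forall x', J a e y0 x' = 0 -> x' = x.
Proof.
  intros He Hy.
  assert (Hlt : y0 * a / e < y0 * a / e + 1 - y0 / e).
  { assert (y0 / e < 1). { apply Rmult_lt_reg_r with e; auto. field_simplify; lra. } lra. }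
  destruct (IVT_interv (fun x => - J a e y0 x) (y0 * a / e) (y0 * a / e + 1 - y0 / e)) as [x [Hx HJ]].
  - intros; apply continuity_pt_opp, J_cont; lra.
  - auto.
  - pose proof (J_lo a e y0 He Hy). lra.
  - pose proof (J_hi a e y0 He Hy). lra.
  - exists x. split; auto. split; [lra|].
    intros x' Hx'. destruct (Rtotal_order x' x) as [H|[H|H]]; auto.
    + pose proof (J_strict a e y0 x' x He ltac:(lra) H). lra.
    + pose proof (J_strict a e y0 x x' He ltac:(lra) H). lra.
Qed.

Definition C0 : Cpx := (0,0).
Definition C1 : Cpx := (1,0).
Definition Copp (z : Cpx) : Cpx := (- fst z, - snd z).
Definition RC (r : R) : Cpx := (r, 0).

Lemma Cpx_eq (z w : Cpx) : fst z = fst w -> snd z = snd w -> z = w.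
Proof. destruct z, w; simpl; intros; subst; reflexivity. Qed.

Lemma norm_nz (z : Cpx) : z <> C0 -> fst z ^ 2 + snd z ^ 2 <> 0.
Proof.
  destruct z as [x y]; simpl; intros H E. apply H. unfold C0.
  assert (x = 0) by nra. assert (y = 0) by nra. subst; reflexivity.
Qed.

Lemma Cring : ring_theory C0 C1 Cadd Cmul Csub Copp (@eq Cpx).
Proof.
  constructor; intros; repeat match goal with z : Cpx |- _ => destruct z end;
  unfold C0, C1, Cadd, Cmul, Csub, Copp; simpl; apply Cpx_eq; simpl; ring.
Qed.

Lemma Cfield : field_theory C0 C1 Cadd Cmul Csub Copp Cdiv Cinv (@eq Cpx).
Proof.
  constructor.
  - exact Cring.
  - unfold C0, C1; intro H; injection H; lra.
  - reflexivity.
  - intros p Hp. pose proof (norm_nz p Hp) as Hn. destruct p as [x y]; cbn [fst snd] in *.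
    unfold Cmul, Cinv, C1; apply Cpx_eq; cbn [fst snd] in *; field; auto.
Qed.

Add Field Cfield_inst : Cfield.

Lemma Cscale_RC r z : Cscale r z = Cmul (RC r) z.
Proof. destruct z; unfold Cscale, Cmul, RC; simpl; apply Cpx_eq; simpl; ring. Qed.


Lemma Cmul_integral z w : Cmul z w = C0 -> z = C0 \/ w = C0.
Proof.
  intros H. destruct (Classical_Prop.classic (z = C0)) as [|Hz]; [left; auto|right].
  assert (Hw : w = Cdiv (Cmul z w) z). { field. auto. }
  rewrite H in Hw. rewrite Hw. field. auto.
Qed.

Lemma sq_eq_cases z w : Cmul z z = Cmul w w -> z = w \/ z = Copp w.
Proof.
  intros H.
  assert (Cmul (Csub z w) (Cadd z w) = C0).
  { replace (Cmul (Csub z w) (Cadd z w)) with (Csub (Cmul z z) (Cmul w w)) by ring.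
    rewrite H. ring. }
  destruct (Cmul_integral _ _ H0) as [H1|H1]; [left|right].
  - replace z with (Cadd (Csub z w) w) by ring. rewrite H1. ring.
  - replace z with (Csub (Cadd z w) w) by ring. rewrite H1. ring.
Qed.

Definition hN (a e y0 x s : R) : Cpx := (Fr a e y0 x s, Fi a e y0 x s).

Lemma Dk_sq s : 0 < s < 1 -> Dk s * Dk s = / (s * (1 - s)).
Proof.
  intros Hs. unfold Dk.
  assert (0 < sqrt s) by (apply sqrt_lt_R0; lra). assert (0 < sqrt (1 - s)) by (apply sqrt_lt_R0; lra).
  assert (sqrt s * sqrt s = s) by (apply sqrt_sqrt; lra).
  assert (sqrt (1-s) * sqrt (1-s) = 1 - s) by (apply sqrt_sqrt; lra).
  replace (s * (1 - s)) with ((sqrt s * sqrt s) * (sqrt (1-s) * sqrt (1-s))) by (rewrite H1, H2; ring).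
  field. split; lra.
Qed.

Lemma hN_sq a e y0 x s : 0 < e -> 0 < y0 -> 0 < s < 1 ->
  Cmul (hN a e y0 x s) (hN a e y0 x s) = integrand C0 C1 (a, e) (x, y0) (Cadd C0 (Cscale s (Csub C1 C0))).
Proof.
  intros He Hy Hs.
  assert (Ht : Cadd C0 (Cscale s (Csub C1 C0)) = RC s) by (unfold Cadd, Cscale, Csub, C0, C1, RC; apply Cpx_eq; simpl; ring).
  rewrite Ht.
  set (sg := (rho a e y0 x s, iota a e y0 x s)).
  assert (Hh : hN a e y0 x s = Cmul (RC (Dk s)) sg).
  { unfold hN, sg, Fr, Fi, RC, Cmul. apply Cpx_eq; simpl; ring. }
  destruct (rho_props a e y0 x s He Hy) as [Hr [E1 E2]].
  assert (Hsg : Cmul sg sg = Cdiv (Csub (RC s) (x, y0)) (Csub (RC s) (a, e))).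
  { pose proof (nv_pos a e s He) as Hn. unfold nv in Hn.
    unfold sg, Cmul, Cdiv, Cinv, Csub, RC. apply Cpx_eq; simpl.
    - replace (rho a e y0 x s * rho a e y0 x s - iota a e y0 x s * iota a e y0 x s) with (Gx a e y0 x s)
        by (rewrite <- E1; ring).
      unfold Gx, urf, uif, nv. field. lra.
    - replace (rho a e y0 x s * iota a e y0 x s + iota a e y0 x s * rho a e y0 x s) with (Gy a e y0 x s)
        by (rewrite <- E2; ring).
      unfold Gy, urf, uif, nv. field. lra. }
  assert (HD : RC (Dk s * Dk s) = Cinv (Cmul (RC s) (Csub C1 (RC s)))).
  { rewrite Dk_sq by auto. unfold RC, Cinv, Cmul, Csub, C1. apply Cpx_eq; simpl; field.
    all: assert (0 < s * (1 - s)) by (apply Rmult_lt_0_compat; lra); nra. }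
  assert (N1 : RC s <> C0) by (unfold RC, C0; intro H; injection H; lra).
  assert (N2 : Csub C1 (RC s) <> C0) by (unfold RC, C0, C1, Csub; intro H; injection H; simpl; lra).
  assert (N3 : Csub (RC s) (a, e) <> C0) by (unfold RC, C0, Csub; intro H; injection H; simpl; lra).
  rewrite Hh.
  replace (Cmul (Cmul (RC (Dk s)) sg) (Cmul (RC (Dk s)) sg)) with (Cmul (RC (Dk s * Dk s)) (Cmul sg sg)).
  2: { replace (RC (Dk s * Dk s)) with (Cmul (RC (Dk s)) (RC (Dk s))) by (unfold RC, Cmul; apply Cpx_eq; simpl; ring). ring. }
  rewrite HD, Hsg. unfold integrand.
  field. repeat split; try assumption; unfold RC, C0, Csub in *; intro HH; injection HH; intros; simpl in *;
  try lra.
Qed.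

Lemma Cmul_1 (z : Cpx) : Cmul z (Csub C1 C0) = z.
Proof. destruct z; unfold Cmul, Csub, C1, C0; apply Cpx_eq; simpl; ring. Qed.

Lemma SIR_exists a e y0 x : 0 < e -> 0 < y0 -> J a e y0 x = 0 ->
  segment_integral_real C0 C1 (a, e) (x, y0) C0 C1.
Proof.
  intros He Hy HJ. exists (hN a e y0 x). split; [|split; [|split]].
  - intros s Hs. split. exact (cont01_Fr a e y0 x He Hy s Hs). exact (cont01_Fi a e y0 x He Hy s Hs).
  - intros s Hs. apply hN_sq; auto.
  - destruct (improper_exists (Fr a e y0 x) (Mb e y0 x)) as [L HL].
    apply cont01_Fr; auto. intros; apply bound_Fr; auto.
    exists L. apply (improper_ext (Fr a e y0 x)); auto.
    intros s Hs. rewrite Cmul_1. reflexivity.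
  - pose proof (J_spec a e y0 x He Hy) as HS. rewrite HJ in HS.
    apply (improper_ext (Fi a e y0 x)); auto. intros s Hs. rewrite Cmul_1. reflexivity.
Qed.

Lemma no_sign_change (g : R -> R) : (forall s, 0 < s < 1 -> continuity_pt g s) ->
  (forall s, 0 < s < 1 -> g s <> 0) ->
  forall s1 s2, 0 < s1 < 1 -> 0 < s2 < 1 -> 0 < g s1 -> 0 < g s2.
Proof.
  intros Hc Hn s1 s2 H1 H2 Hg1.
  destruct (Rlt_dec 0 (g s2)) as [|Hg2]; auto. exfalso.
  assert (Hg2' : g s2 < 0) by (pose proof (Hn s2 H2); lra).
  destruct (Rtotal_order s1 s2) as [Hlt|[Heq|Hgt]].
  - destruct (IVT_interv (fun u => - g u) s1 s2) as [z [Hz Hgz]]; auto; try lra.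
    intros; apply continuity_pt_opp, Hc; lra.
    apply (Hn z); lra.
  - subst; lra.
  - destruct (IVT_interv g s2 s1) as [z [Hz Hgz]]; auto; try lra.
    intros; apply Hc; lra.
    apply (Hn z); lra.
Qed.

Lemma Fr_pos a e y0 x s : 0 < e -> 0 < y0 -> 0 < s < 1 -> 0 < Fr a e y0 x s.
Proof.
  intros. unfold Fr. apply Rmult_lt_0_compat. apply rho_props; auto. apply Dk_pos; auto.
Qed.

Lemma SIR_unique a e y0 x : 0 < e -> 0 < y0 ->
  segment_integral_real C0 C1 (a, e) (x, y0) C0 C1 -> J a e y0 x = 0.
Proof.
  intros He Hy [h [Hc [Hsq [_ Him]]]].
  assert (Hcase : forall s, 0 < s < 1 -> h s = hN a e y0 x s \/ h s = Copp (hN a e y0 x s)).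
  { intros s Hs. apply sq_eq_cases. rewrite Hsq, hN_sq; auto. }
  assert (Hnz : forall s, 0 < s < 1 -> fst (h s) <> 0).
  { intros s Hs. pose proof (Fr_pos a e y0 x s He Hy Hs).
    destruct (Hcase s Hs) as [E|E]; rewrite E; unfold hN, Copp; simpl; lra. }
  assert (Hcg : forall s, 0 < s < 1 -> continuity_pt (fun u => fst (h u)) s) by (intros; apply Hc; auto).
  pose proof (J_spec a e y0 x He Hy) as HJ.
  destruct (Rlt_dec 0 (fst (h (1/2)))) as [Hp|Hn].
  - assert (Hall : forall s, 0 < s < 1 -> h s = hN a e y0 x s).
    { intros s Hs. pose proof (no_sign_change _ Hcg Hnz (1/2) s ltac:(lra) Hs Hp).
      pose proof (Fr_pos a e y0 x s He Hy Hs).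
      destruct (Hcase s Hs) as [E|E]; auto. cbv beta in H. rewrite E in H. unfold hN, Copp in H; simpl in H. lra. }
    apply (improper_unique (Fi a e y0 x)); auto.
    apply (improper_ext (fun s => snd (Cmul (h s) (Csub C1 C0)))); auto.
    intros s Hs. rewrite Cmul_1, Hall; auto.
  - assert (Hneg : 0 < - fst (h (1/2))) by (pose proof (Hnz (1/2) ltac:(lra)); lra).
    assert (Hcg' : forall s, 0 < s < 1 -> continuity_pt (fun u => - fst (h u)) s)
      by (intros; apply continuity_pt_opp, Hc; auto).
    assert (Hnz' : forall s, 0 < s < 1 -> - fst (h s) <> 0) by (intros s Hs; pose proof (Hnz s Hs); lra).
    assert (Hall : forall s, 0 < s < 1 -> h s = Copp (hN a e y0 x s)).
    { intros s Hs. pose proof (no_sign_change _ Hcg' Hnz' (1/2) s ltac:(lra) Hs Hneg).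
      pose proof (Fr_pos a e y0 x s He Hy Hs).
      destruct (Hcase s Hs) as [E|E]; auto. cbv beta in H. rewrite E in H. unfold hN in H; simpl in H. lra. }
    assert (H1 : improper_int (fun s => - Fi a e y0 x s) 0 1 0).
    { apply (improper_ext (fun s => snd (Cmul (h s) (Csub C1 C0)))); auto.
      intros s Hs. rewrite Cmul_1, Hall; auto. }
    pose proof (improper_lin _ _ (-2) _ _ H1 H1) as H2.
    replace (0 + -2 * 0) with 0 in H2 by ring.
    apply (improper_unique (Fi a e y0 x)); auto.
    apply (improper_ext (fun s => - Fi a e y0 x s + -2 * - Fi a e y0 x s)); [intros s Hs; ring | exact H2].
Qed.

Definition Cconj (z : Cpx) : Cpx := (fst z, - snd z).
Definition cjf (cj : bool) (z : Cpx) : Cpx := if cj then Cconj z else z.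

Lemma cjf_add cj z w : cjf cj (Cadd z w) = Cadd (cjf cj z) (cjf cj w).
Proof. destruct cj; unfold cjf, Cconj, Cadd; auto; apply Cpx_eq; simpl; ring. Qed.
Lemma cjf_sub cj z w : cjf cj (Csub z w) = Csub (cjf cj z) (cjf cj w).
Proof. destruct cj; unfold cjf, Cconj, Csub; auto; apply Cpx_eq; simpl; ring. Qed.
Lemma cjf_mul cj z w : cjf cj (Cmul z w) = Cmul (cjf cj z) (cjf cj w).
Proof. destruct cj; unfold cjf, Cconj, Cmul; auto; apply Cpx_eq; simpl; ring. Qed.
Lemma cjf_inv cj z : cjf cj (Cinv z) = Cinv (cjf cj z).
Proof.
  destruct cj; [|reflexivity]. destruct z as [x y]. unfold cjf, Cconj, Cinv. cbn [fst snd].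
  replace ((-y)^2) with (y^2) by ring. apply Cpx_eq; cbn [fst snd]; unfold Rdiv; ring.
Qed.
Lemma cjf_div cj z w : cjf cj (Cdiv z w) = Cdiv (cjf cj z) (cjf cj w).
Proof. unfold Cdiv. rewrite cjf_mul, cjf_inv. auto. Qed.
Lemma cjf_RC cj r : cjf cj (RC r) = RC r.
Proof. destruct cj; unfold cjf, Cconj, RC; auto; apply Cpx_eq; simpl; ring. Qed.
Lemma cjf_C0 cj : cjf cj C0 = C0.
Proof. destruct cj; unfold cjf, Cconj, C0; auto; apply Cpx_eq; simpl; ring. Qed.
Lemma cjf_C1 cj : cjf cj C1 = C1.
Proof. destruct cj; unfold cjf, Cconj, C1; auto; apply Cpx_eq; simpl; ring. Qed.
Lemma cjf_invol cj z : cjf cj (cjf cj z) = z.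
Proof. destruct cj; unfold cjf, Cconj; auto; destruct z; apply Cpx_eq; simpl; ring. Qed.
Lemma cjf_fst cj z : fst (cjf cj z) = fst z.
Proof. destruct cj; auto. Qed.
Definition sgn (cj : bool) : R := if cj then -1 else 1.
Lemma cjf_snd cj z : snd (cjf cj z) = sgn cj * snd z.
Proof. destruct cj; unfold cjf, Cconj, sgn; simpl; ring. Qed.
Lemma sgn_sq cj : sgn cj * sgn cj = 1.
Proof. destruct cj; unfold sgn; ring. Qed.

Lemma cjf_integrand cj a1 a2 a3 b t :
  cjf cj (integrand a1 a2 a3 b t) = integrand (cjf cj a1) (cjf cj a2) (cjf cj a3) (cjf cj b) (cjf cj t).
Proof. unfold integrand. rewrite cjf_div, !cjf_mul, !cjf_sub. auto. Qed.

Lemma improper_scale f k L : improper_int f 0 1 L -> improper_int (fun s => k * f s) 0 1 (k * L).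
Proof.
  intros H. pose proof (improper_lin _ _ (k - 1) _ _ H H) as H2.
  replace (k * L) with (L + (k - 1) * L) by ring.
  apply (improper_ext (fun x => f x + (k - 1) * f x)); auto. intros; ring.
Qed.

Lemma cont_ext f g s : continuity_pt f s -> (forall u, f u = g u) -> continuity_pt g s.
Proof. intros H E. replace g with f; auto. apply functional_extensionality; auto. Qed.

Lemma cont_lin2 f g k1 k2 s : continuity_pt f s -> continuity_pt g s ->
  continuity_pt (fun u => k1 * f u + k2 * g u) s.
Proof.
  intros. apply continuity_pt_plus; apply continuity_pt_mult; auto;
  apply continuity_pt_const; intros ? ?; reflexivity.
Qed.

Lemma cont_map (h : R -> Cpx) (cj : bool) (w : Cpx) s :
  continuity_pt (fun u => fst (h u)) s -> continuity_pt (fun u => snd (h u)) s ->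
  continuity_pt (fun u => fst (cjf cj (Cmul (h u) w))) s /\
  continuity_pt (fun u => snd (cjf cj (Cmul (h u) w))) s.
Proof.
  intros H1 H2. split.
  - apply (cont_ext (fun u => fst w * fst (h u) + (- snd w) * snd (h u))).
    apply cont_lin2; auto. intros u. rewrite cjf_fst. unfold Cmul; simpl; ring.
  - apply (cont_ext (fun u => (sgn cj * snd w) * fst (h u) + (sgn cj * fst w) * snd (h u))).
    apply cont_lin2; auto. intros u. rewrite cjf_snd. unfold Cmul; simpl; ring.
Qed.

Definition Tn (p q z : Cpx) : Cpx := Cdiv (Csub z p) (Csub q p).

Lemma param_eq p q s : Cadd p (Cscale s (Csub q p)) = Cadd p (Cmul (RC s) (Csub q p)).
Proof. rewrite Cscale_RC; auto. Qed.

Lemma param0 s : Cadd C0 (Cscale s (Csub C1 C0)) = RC s.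
Proof. unfold Cadd, Cscale, Csub, C0, C1, RC; apply Cpx_eq; simpl; ring. Qed.

Lemma RC_neq0 s : 0 < s < 1 -> RC s <> C0.
Proof. intros Hs H; unfold RC, C0 in H; injection H; lra. Qed.
Lemma RC_neq1 s : 0 < s < 1 -> Csub (RC s) C1 <> C0.
Proof. intros Hs H; unfold RC, C0, C1, Csub in H; injection H; simpl; lra. Qed.

Lemma integrand_transfer p q c b' s :
  Csub q p <> C0 -> 0 < s < 1 -> Csub (Cadd p (Cmul (RC s) (Csub q p))) c <> C0 ->
  Cmul (integrand p q c b' (Cadd p (Cmul (RC s) (Csub q p)))) (Cmul (Csub q p) (Csub q p)) =
  integrand C0 C1 (Tn p q c) (Tn p q b') (RC s).
Proof.
  intros Hd Hs Hc. pose proof (RC_neq0 s Hs) as N1. pose proof (RC_neq1 s Hs) as N2.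
  assert (N3 : Csub (RC s) (Tn p q c) <> C0).
  { intro H. apply Hc. unfold Tn in H.
    replace (Csub (Cadd p (Cmul (RC s) (Csub q p))) c) with (Cmul (Csub (RC s) (Cdiv (Csub c p) (Csub q p))) (Csub q p))
      by (field; auto).
    rewrite H. ring. }
  assert (N4 : Csub (Cadd p (Cmul (RC s) (Csub q p))) p <> C0).
  { intro H. apply N1. replace (RC s) with (Cdiv (Csub (Cadd p (Cmul (RC s) (Csub q p))) p) (Csub q p)) by (field; auto).
    rewrite H. field; auto. }
  assert (N5 : Csub (Cadd p (Cmul (RC s) (Csub q p))) q <> C0).
  { intro H. apply N2. replace (Csub (RC s) C1) with (Cdiv (Csub (Cadd p (Cmul (RC s) (Csub q p))) q) (Csub q p)) by (field; auto).
    rewrite H. field; auto. }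
  unfold integrand, Tn in *. field. repeat split; auto.
  - intro H; apply Hc. replace (Csub (Cadd p (Cmul (RC s) (Csub q p))) c) with (Csub (Cmul (RC s) (Csub q p)) (Csub c p)) by ring. exact H.
Qed.

Lemma transfer_fwd cj p q c b' : Csub q p <> C0 ->
  (forall s, 0 < s < 1 -> Csub (Cadd p (Cmul (RC s) (Csub q p))) c <> C0) ->
  segment_integral_real p q c b' p q ->
  segment_integral_real C0 C1 (cjf cj (Tn p q c)) (cjf cj (Tn p q b')) C0 C1.
Proof.
  intros Hd Hc [h [Hcont [Hsq [[L HL] Him]]]].
  exists (fun s => cjf cj (Cmul (h s) (Csub q p))). split; [|split; [|split]].
  - intros s Hs; destruct (Hcont s Hs); apply cont_map; auto.
  - intros s Hs. rewrite param0. rewrite <- cjf_mul.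
    replace (Cmul (Cmul (h s) (Csub q p)) (Cmul (h s) (Csub q p))) with
      (Cmul (Cmul (h s) (h s)) (Cmul (Csub q p) (Csub q p))) by ring.
    rewrite Hsq by auto. rewrite param_eq, integrand_transfer; auto.
    rewrite cjf_integrand, cjf_C0, cjf_C1, cjf_RC. auto.
  - exists L. apply (improper_ext (fun s => fst (Cmul (h s) (Csub q p)))); auto.
    intros s Hs; rewrite Cmul_1, cjf_fst; auto.
  - pose proof (improper_scale _ (sgn cj) _ Him) as H. rewrite Rmult_0_r in H.
    apply (improper_ext _ _ _ (fun s Hs => eq_sym (f_equal (fun z => z) (eq_trans (f_equal snd (Cmul_1 _)) (cjf_snd cj _)))) H).
Qed.

Lemma transfer_bwd cj p q c b' : Csub q p <> C0 ->
  (forall s, 0 < s < 1 -> Csub (Cadd p (Cmul (RC s) (Csub q p))) c <> C0) ->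
  segment_integral_real C0 C1 (cjf cj (Tn p q c)) (cjf cj (Tn p q b')) C0 C1 ->
  segment_integral_real p q c b' p q.
Proof.
  intros Hd Hc [h [Hcont [Hsq [[L HL] Him]]]].
  set (d := Csub q p) in *.
  assert (Hhd : forall s, Cmul (Cdiv (cjf cj (h s)) d) d = cjf cj (h s)) by (intros; field; auto).
  exists (fun s => Cdiv (cjf cj (h s)) d). split; [|split; [|split]].
  - intros s Hs; destruct (Hcont s Hs) as [H1 H2].
    destruct (cont_map h cj (cjf cj (Cinv d)) s H1 H2) as [K1 K2].
    assert (E : forall u, cjf cj (Cmul (h u) (cjf cj (Cinv d))) = Cdiv (cjf cj (h u)) d).
    { intros u. rewrite cjf_mul, cjf_invol. reflexivity. }
    split; [apply (cont_ext _ _ _ K1)|apply (cont_ext _ _ _ K2)]; intros u; rewrite E; auto.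
  - intros s Hs.
    assert (E1 : Cmul (Cdiv (cjf cj (h s)) d) (Cdiv (cjf cj (h s)) d) = Cdiv (cjf cj (Cmul (h s) (h s))) (Cmul d d)).
    { rewrite cjf_mul. field; auto. }
    rewrite E1, Hsq by auto. rewrite param0.
    rewrite cjf_integrand, cjf_C0, cjf_C1, cjf_RC, !cjf_invol.
    unfold d. rewrite <- integrand_transfer; auto. rewrite <- param_eq. fold d. field; auto.
  - exists L. apply (improper_ext (fun s => fst (Cmul (h s) (Csub C1 C0)))); auto.
    intros s Hs. rewrite Hhd, Cmul_1, cjf_fst; auto.
  - pose proof (improper_scale _ (sgn cj) _ Him) as H. rewrite Rmult_0_r in H.
    apply (improper_ext _ _ _ (fun s Hs => eq_sym (eq_trans (f_equal snd (Hhd s)) (eq_trans (cjf_snd cj _) (f_equal (fun z => sgn cj * snd z) (eq_sym (Cmul_1 _)))))) H).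
Qed.

Definition kappa (p q c : Cpx) : R :=
  (snd c - snd p) * (fst q - fst p) - (fst c - fst p) * (snd q - snd p).

Lemma Tn_shift p q b r : Csub q p <> C0 ->
  Tn p q (Cadd b (Cscale r (Csub q p))) = Cadd (Tn p q b) (RC r).
Proof. intros. unfold Tn. rewrite Cscale_RC. field. auto. Qed.

Lemma RC_add x y : RC (x + y) = Cadd (RC x) (RC y).
Proof. unfold RC, Cadd; apply Cpx_eq; simpl; ring. Qed.
Lemma RC_1 : RC 1 = C1.
Proof. reflexivity. Qed.

Lemma Tn_bary p q c b mp mq mc : Csub q p <> C0 -> mp + mq + mc = 1 ->
  b = Cadd (Cadd (Cscale mp p) (Cscale mq q)) (Cscale mc c) ->
  Tn p q b = Cadd (RC mq) (Cmul (RC mc) (Tn p q c)).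
Proof.
  intros Hd Hs Hb. subst b. rewrite !Cscale_RC.
  replace mp with (1 - mq - mc) by lra.
  replace (RC (1 - mq - mc)) with (Csub (Csub C1 (RC mq)) (RC mc))
    by (unfold RC, C1, Csub; apply Cpx_eq; simpl; ring).
  unfold Tn. field. auto.
Qed.

Lemma Tn_im p q c : Csub q p <> C0 ->
  snd (Tn p q c) = kappa p q c / ((fst q - fst p) ^ 2 + (snd q - snd p) ^ 2).
Proof.
  intros Hd. pose proof (norm_nz _ Hd) as Hn. unfold Tn, kappa, Cdiv, Cmul, Cinv, Csub in *. cbn [fst snd] in *.
  field. auto.
Qed.

Lemma core_general p q c b mp mq mc : 0 < mp -> 0 < mq -> 0 < mc -> mp + mq + mc = 1 ->
  b = Cadd (Cadd (Cscale mp p) (Cscale mq q)) (Cscale mc c) -> kappa p q c <> 0 ->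
  exists r, - mq <= r <= mp /\
    segment_integral_real p q c (Cadd b (Cscale r (Csub q p))) p q /\
    forall r', segment_integral_real p q c (Cadd b (Cscale r' (Csub q p))) p q -> r' = r.
Proof.
  intros Hp Hq Hc Hsum Hb Hk.
  assert (Hd : Csub q p <> C0).
  { intro H. apply Hk. unfold kappa. unfold Csub, C0 in H. injection H; intros E1 E2.
    rewrite E1, E2. ring. }
  assert (Hline : forall s, 0 < s < 1 -> Csub (Cadd p (Cmul (RC s) (Csub q p))) c <> C0).
  { intros s Hs H. apply Hk. unfold kappa. unfold Csub, Cadd, Cmul, RC, C0 in H. cbn [fst snd] in H.
    injection H; intros E1 E2.
    replace (snd c - snd p) with (s * (snd q - snd p)) by lra.
    replace (fst c - fst p) with (s * (fst q - fst p)) by lra. ring. }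
  pose proof (norm_nz _ Hd) as Hn.
  assert (Hn' : 0 < (fst q - fst p) ^ 2 + (snd q - snd p) ^ 2).
  { assert (0 <= (fst q - fst p) ^ 2 + (snd q - snd p) ^ 2) by (pose proof (pow2_ge_0 (fst q - fst p)); pose proof (pow2_ge_0 (snd q - snd p)); lra).
    unfold Csub in Hn; cbn [fst snd] in Hn. lra. }
  set (cj := if Rlt_dec (kappa p q c) 0 then true else false).
  set (al := cjf cj (Tn p q c)).
  set (a := fst al). set (e := snd al).
  assert (He : 0 < e).
  { unfold e, al, cj. rewrite cjf_snd, Tn_im by auto. unfold sgn.
    destruct (Rlt_dec (kappa p q c) 0) as [Hneg|Hnn].
    - replace (-1 * (kappa p q c / ((fst q - fst p) ^ 2 + (snd q - snd p) ^ 2))) with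
        ((- kappa p q c) / ((fst q - fst p) ^ 2 + (snd q - snd p) ^ 2)) by (field; lra).
      apply Rdiv_lt_0_compat; lra.
    - rewrite Rmult_1_l. apply Rdiv_lt_0_compat; auto. lra. }
  assert (Hal : al = (a, e)) by (unfold a, e; destruct al; reflexivity).
  assert (HTb : forall r, cjf cj (Tn p q (Cadd b (Cscale r (Csub q p)))) = (mq + mc * a + r, mc * e)).
  { intros r. rewrite Tn_shift, (Tn_bary p q c b mp mq mc) by auto.
    rewrite cjf_add, cjf_add, cjf_mul, !cjf_RC. fold al. rewrite Hal.
    unfold Cadd, Cmul, RC; apply Cpx_eq; simpl; ring. }
  set (y0 := mc * e).
  assert (Hy : 0 < y0 < e).
  { unfold y0. split. apply Rmult_lt_0_compat; auto. 
    assert ((1 - mc) * e > 0) by (apply Rmult_lt_0_compat; lra). lra. }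
  destruct (J_root a e y0 He Hy) as [x [Hx [HJ Huniq]]].
  assert (Hy0 : y0 * a / e = mc * a) by (unfold y0; field; lra).
  assert (Hy1 : y0 / e = mc) by (unfold y0; field; lra).
  exists (x - mq - mc * a). split; [|split].
  - rewrite Hy0, Hy1 in Hx. lra.
  - apply (transfer_bwd cj); auto. fold al. rewrite Hal, HTb.
    replace (mq + mc * a + (x - mq - mc * a)) with x by ring.
    apply SIR_exists; [exact He| exact (proj1 Hy) | exact HJ].
  - intros r' Hr'. apply (transfer_fwd cj) in Hr'; auto. fold al in Hr'. rewrite Hal, HTb in Hr'.
    apply SIR_unique in Hr'; [|exact He|exact (proj1 Hy)].
    apply Huniq in Hr'. clearbody y0 a e. lra.
Qed.

Lemma SIR_perm a1 a2 a3 p q c b' :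
  (forall t, Cmul (Cmul (Csub t a1) (Csub t a2)) (Csub t a3) = Cmul (Cmul (Csub t p) (Csub t q)) (Csub t c)) ->
  segment_integral_real p q c b' p q -> segment_integral_real a1 a2 a3 b' p q.
Proof.
  intros Hprod H. assert (E : integrand a1 a2 a3 b' = integrand p q c b').
  { apply functional_extensionality; intros t. unfold integrand. rewrite Hprod. auto. }
  unfold segment_integral_real. rewrite E. exact H.
Qed.

Lemma SIR_perm' a1 a2 a3 p q c b' :
  (forall t, Cmul (Cmul (Csub t a1) (Csub t a2)) (Csub t a3) = Cmul (Cmul (Csub t p) (Csub t q)) (Csub t c)) ->
  segment_integral_real a1 a2 a3 b' p q -> segment_integral_real p q c b' p q.
Proof.
  intros Hprod H. assert (E : integrand a1 a2 a3 b' = integrand p q c b').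
  { apply functional_extensionality; intros t. unfold integrand. rewrite Hprod. auto. }
  unfold segment_integral_real in *. rewrite <- E. exact H.
Qed.

Lemma main_generic a1 a2 a3 p q c b mp mq mc :
  (forall t, Cmul (Cmul (Csub t a1) (Csub t a2)) (Csub t a3) = Cmul (Cmul (Csub t p) (Csub t q)) (Csub t c)) ->
  kappa p q c <> 0 -> 0 < mp -> 0 < mq -> 0 < mc -> mp + mq + mc = 1 ->
  b = Cadd (Cadd (Cscale mp p) (Cscale mq q)) (Cscale mc c) ->
  (forall r, - mq <= r <= mp -> in_triangle a1 a2 a3 (Cadd (Cadd (Cscale (mp - r) p) (Cscale (mq + r) q)) (Cscale mc c))) ->
  exists b' : Cpx,
    (on_parallel_line b p q b' /\ segment_integral_real a1 a2 a3 b' p q /\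
     (forall b'' : Cpx, on_parallel_line b p q b'' -> segment_integral_real a1 a2 a3 b'' p q -> b'' = b')) /\
    in_triangle a1 a2 a3 b'.
Proof.
  intros Hprod Hk Hp Hq Hc Hs Hb Htri.
  destruct (core_general p q c b mp mq mc Hp Hq Hc Hs Hb Hk) as [r [Hr [HS HU]]].
  exists (Cadd b (Cscale r (Csub q p))). split; [split; [|split]|].
  - exists r. reflexivity.
  - apply (SIR_perm _ _ _ p q c); auto.
  - intros b'' [r'' ->] H''. apply (SIR_perm' _ _ _ p q c) in H''; auto.
    apply HU in H''. subst. reflexivity.
  - replace (Cadd b (Cscale r (Csub q p))) with (Cadd (Cadd (Cscale (mp - r) p) (Cscale (mq + r) q)) (Cscale mc c)).
    apply Htri; auto.
    rewrite Hb. unfold Cadd, Cscale, Csub; apply Cpx_eq; simpl; ring.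
Qed.

Ltac tri_fin := repeat split; try lra;
  unfold Cadd, Cscale; apply Cpx_eq; simpl; ring.

Ltac prod_case := intros t; unfold Cmul, Csub; apply Cpx_eq; simpl; ring.

Ltac kap_case Hnc := let HK := fresh in intro HK; unfold noncollinear, kappa in *; apply Hnc; lra.

Theorem mainTheorem12 (a1 a2 a3 : Cpx) (i j k : nat)
  (Hd12 : a1 <> a2) (Hd13 : a1 <> a3) (Hd23 : a2 <> a3)
  (Hnc : noncollinear a1 a2 a3)
  (Hi : (1 <= i <= 3)%nat) (Hj : (1 <= j <= 3)%nat) (Hk : (1 <= k <= 3)%nat)
  (Hij : i <> j) (Hik : i <> k) (Hjk : j <> k)
  (b : Cpx) (Hb : in_triangle_interior a1 a2 a3 b) :
  exists b' : Cpx,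
    (on_parallel_line b (sel a1 a2 a3 j) (sel a1 a2 a3 k) b' /\
     segment_integral_real a1 a2 a3 b' (sel a1 a2 a3 j) (sel a1 a2 a3 k) /\
     (forall b'' : Cpx,
        on_parallel_line b (sel a1 a2 a3 j) (sel a1 a2 a3 k) b'' ->
        segment_integral_real a1 a2 a3 b'' (sel a1 a2 a3 j) (sel a1 a2 a3 k) ->
        b'' = b')) /\
    in_triangle a1 a2 a3 b'.
Proof.
  destruct Hb as [l1 [l2 [l3 [H1 [H2 [H3 [Hs Hb]]]]]]].
  assert (Ei : i = 1%nat \/ i = 2%nat \/ i = 3%nat) by lia.
  assert (Ej : j = 1%nat \/ j = 2%nat \/ j = 3%nat) by lia.
  assert (Ek : k = 1%nat \/ k = 2%nat \/ k = 3%nat) by lia.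
  destruct Ei as [ -> | [ -> | -> ] ]; destruct Ej as [ -> | [ -> | -> ] ]; destruct Ek as [ -> | [ -> | -> ] ];
    try lia; simpl.
  -
    apply (main_generic a1 a2 a3 a2 a3 a1 b l2 l3 l1); try lra.
    + prod_case.
    + kap_case Hnc.
    + rewrite Hb. unfold Cadd, Cscale; apply Cpx_eq; simpl; ring.
    + intros r Hr; exists l1, (l2 - r), (l3 + r); tri_fin.
  -
    apply (main_generic a1 a2 a3 a3 a2 a1 b l3 l2 l1); try lra.
    + prod_case.
    + kap_case Hnc.
    + rewrite Hb. unfold Cadd, Cscale; apply Cpx_eq; simpl; ring.
    + intros r Hr; exists l1, (l2 + r), (l3 - r); tri_fin.
  -
    apply (main_generic a1 a2 a3 a1 a3 a2 b l1 l3 l2); try lra.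
    + prod_case.
    + kap_case Hnc.
    + rewrite Hb. unfold Cadd, Cscale; apply Cpx_eq; simpl; ring.
    + intros r Hr; exists (l1 - r), l2, (l3 + r); tri_fin.
  -
    apply (main_generic a1 a2 a3 a3 a1 a2 b l3 l1 l2); try lra.
    + prod_case.
    + kap_case Hnc.
    + rewrite Hb. unfold Cadd, Cscale; apply Cpx_eq; simpl; ring.
    + intros r Hr; exists (l1 + r), l2, (l3 - r); tri_fin.
  -
    apply (main_generic a1 a2 a3 a1 a2 a3 b l1 l2 l3); try lra.
    + prod_case.
    + kap_case Hnc.
    + rewrite Hb. unfold Cadd, Cscale; apply Cpx_eq; simpl; ring.
    + intros r Hr; exists (l1 - r), (l2 + r), l3; tri_fin.
  -
    apply (main_generic a1 a2 a3 a2 a1 a3 b l2 l1 l3); try lra.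
    + prod_case.
    + kap_case Hnc.
    + rewrite Hb. unfold Cadd, Cscale; apply Cpx_eq; simpl; ring.
    + intros r Hr; exists (l1 + r), (l2 - r), l3; tri_fin.
Qed.
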